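(* Let $H$ be the (complete) history of an execution of the SC-ABD algorithm (described in the context), let $H^{lt}$ be its logical-time history, let $x$ be a register, and let $o_1,o_2$ be operations in $H^{lt}|x$ such that $o_1$ contains an update phase and $o_2$ contains a query phase. If $o_1 <_{H^{lt}|x} o_2$, then $ts(o_1)\le ts(o_2)$.
   Context: System model: $n$ processes $p_1,\dots,p_n$, $\Pi=\{1,\dots,n\}$, asynchronous, reliable links, crash-stop failures, at most $f<n/2$ faulty processes. Registers hold integers, initially $0$; operations READ($r$), WRITE($r,v$); each process has at most one outstanding operation. A history is the sequence of invocation/response events ordered by real time; only complete histories are considered. $H|x$ is the subsequence of events of operations targeting register $x$. For operations $o_1,o_2$ in a sequence $G$ of events, $o_1<_G o_2$ means the response event of $o_1$ precedes the invocation event of $o_2$ in $G$. Algorithm SC-ABD (code for $p_i$). Local variables: logical clock $lt$ (initially $0$); request id $rid$ (initially $0$); map $tvps$ from registers to timestamp-value pairs, initially $((0,0),0)$; set $responses$ (initially empty); boolean $reading$; temporaries $rreg,rval$. Timestamps are pairs (integer, process id), compared lexicographically; timestamp-value pairs are compared by timestamp (then value). Every message carries the sender's current $lt$; ''bcast $m$'' means send $m$ to every $p_j$, $j\in\Pi$. Handlers: - READ($r$) invoked: $lt\gets lt+1$; $reading\gets true$; $rreg\gets r$; $rid\gets rid+1$; bcast (''query'', $lt$, $rid$, $r$). - On (''query'', $lt'$, $rid'$, $r$) from $p_j$: $lt\gets\max(lt,lt')+1$; send (''response'', $lt$, $rid'$, $tvps[r]$) to $p_j$. - On (''response'', $lt'$,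 $rid'$, $tsv'$) from $p_j$ with $rid=rid'$: $lt\gets\max(lt,lt')+1$; $responses\gets responses\cup\{(tsv',j)\}$; if $|responses|=\lfloor n/2\rfloor+1$: let $tsv=(ts,rval)$ be the received pair with maximal timestamp; $responses\gets\{\}$; $rid\gets rid+1$; bcast (''update'', $lt$, $rid$, $rreg$, $tsv$). - WRITE($r,v$) invoked: $lt\gets lt+1$; $reading\gets false$; $tsv\gets((lt,i),v)$; $rid\gets rid+1$; bcast (''update'', $lt$, $rid$, $r$, $tsv$). - On (''update'', $lt'$, $rid'$, $r$, $tsv'$) from $p_j$: $lt\gets\max(lt,lt')+1$; $tvps[r]\gets\max(tvps[r],tsv')$; send (''ack'', $lt$, $rid'$) to $p_j$. - On (''ack'', $lt'$, $rid'$) from $p_j$ with $rid=rid'$: $lt\gets\max(lt,lt')+1$; $responses\gets responses\cup\{j\}$; if $|responses|=\lfloor n/2\rfloor+1$: $responses\gets\{\}$; $rid\gets rid+1$; if $reading$ return $rval$ else return OK. Phases: the query phase of a read is the broadcast of ''query'' messages and the collection of a majority of ''response'' messages; the update phase of an operation is the broadcast of ''update'' messages and the collection of a majority of ''ack'' messages. A write has only an update phase; a read has a query phase followed by an update phase. The timestamp $ts(o)$ of an operation $o$ is the timestamp in the pair broadcast in its update phase. Logical time: the logical time of a handler execution is the value assigned to $lt$ on its first line; the logical time of an invocation event is that of the invocation handler, and of a response event that of the handler that returns. The logical-time history $H^{lt}$ is the sequence of the events of $H$ reordered by their logical times, ties broken by the identifier of the process at which the event occurs. *)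

(* Defs.v *)
From Stdlib Require Import Arith ZArith List Bool.
Import ListNotations.

(* a timestamp is (integer, process id); registers are named by nat,
   values are integers (Z). *)
Definition ts := (nat * nat)%type.
Definition tsv := (ts * Z)%type.
Definition tsv_init : tsv := ((0, 0), 0%Z).

Definition ts_lt (a b : ts) : Prop :=
  fst a < fst b \/ (fst a = fst b /\ snd a < snd b).
Definition ts_le (a b : ts) : Prop := ts_lt a b \/ a = b.

Definition ts_ltb (a b : ts) : bool :=
  (fst a <? fst b) || ((fst a =? fst b) && (snd a <? snd b)).
Definition ts_eqb (a b : ts) : bool := (fst a =? fst b) && (snd a =? snd b).

Definition tsv_leb (a b : tsv) : bool :=
  ts_ltb (fst a) (fst b) || (ts_eqb (fst a) (fst b) && Z.leb (snd a) (snd b)).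
Definition tsv_max (a b : tsv) : tsv := if tsv_leb a b then b else a.
Definition tsv_eqb (a b : tsv) : bool := ts_eqb (fst a) (fst b) && Z.eqb (snd a) (snd b).

Definition list_max_tsv (l : list tsv) : tsv :=
  match l with
  | [] => tsv_init
  | t :: l' => fold_left tsv_max l' t
  end.

Inductive payload :=
| Query (rid : nat) (r : nat)
| Response (rid : nat) (t : tsv)
| Update (rid : nat) (r : nat) (t : tsv)
| Ack (rid : nat).

Record msg := mkM { src : nat; dst : nat; mlt : nat; pl : payload }.

Inductive entry :=
| EResp (t : tsv) (j : nat)
| EAck (j : nat).

Definition entry_eqb (a b : entry) : bool :=
  match a, b with
  | EResp t j, EResp t' j' => tsv_eqb t t' && (j =? j')
  | EAck j, EAck j' => j =? j'
  | _, _ => false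
  end.

Definition set_add (e : entry) (l : list entry) : list entry :=
  if existsb (entry_eqb e) l then l else e :: l.

Definition resp_tsvs (l : list entry) : list tsv :=
  flat_map (fun e => match e with EResp t _ => [t] | EAck _ => [] end) l.

Inductive opkind := ORead (r : nat) | OWrite (r : nat) (v : Z).
Definition op_reg (o : opkind) : nat := match o with ORead r => r | OWrite r _ => r end.

(* Operations are identified by (p, k): the k-th operation invoked by p.
   LInv / LResp are the invocation / response events of the history H,
   with their logical time; LQry p k marks the start (broadcast) of the
   query phase of operation (p,k); LUpd p k t marks the broadcast of the
   update phase of (p,k) with the pair t. *)
Inductive label :=
| LInv (p k lt : nat) (o : opkind)
| LResp (p k lt : nat) (res : option Z)   (* None = OK *)
| LQry (p k : nat)
| LUpd (p k : nat) (t : tsv).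

Record lstate := mkL {
  lt : nat; rid : nat; tvps : nat -> tsv; resps : list entry;
  reading : bool; rreg : nat; rval : Z;
  busy : bool;
  opcnt : nat;      (* ghost: number of operations invoked so far *)
  crashed : bool }.

Definition linit : lstate :=
  mkL 0 0 (fun _ => tsv_init) [] false 0 0%Z false 0 false.

Definition maj (n : nat) : nat := n / 2 + 1.

Definition bcast (n i l : nat) (p : payload) : list msg :=
  map (fun j => mkM i j l p) (seq 1 n).

Definition inv_read (n i r : nat) (s : lstate) : lstate * list msg * list label :=
  let k := opcnt s in
  let l := lt s + 1 in
  let rd := rid s + 1 in
  (mkL l rd (tvps s) (resps s) true r (rval s) true (k + 1) (crashed s),
   bcast n i l (Query rd r),
   [LInv i k l (ORead r); LQry i k]).

Definition inv_write (n i r : nat) (v : Z) (s : lstate) : lstate * list msg * list label :=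
  let k := opcnt s in
  let l := lt s + 1 in
  let t : tsv := ((l, i), v) in
  let rd := rid s + 1 in
  (mkL l rd (tvps s) (resps s) false (rreg s) (rval s) true (k + 1) (crashed s),
   bcast n i l (Update rd r t),
   [LInv i k l (OWrite r v); LUpd i k t]).

(* message m received at p_i (a message whose rid does not match is
   consumed without executing any handler) *)
Definition deliver (n i : nat) (s : lstate) (m : msg) : lstate * list msg * list label :=
  let l := Nat.max (lt s) (mlt m) + 1 in
  match pl m with
  | Query rd r =>
      (mkL l (rid s) (tvps s) (resps s) (reading s) (rreg s) (rval s)
           (busy s) (opcnt s) (crashed s),
       [mkM i (src m) l (Response rd (tvps s r))], [])
  | Response rd t =>
      if rid s =? rd then
        let rs := set_add (EResp t (src m)) (resps s) in
        if length rs =? maj n then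
          let tm := list_max_tsv (resp_tsvs rs) in
          let rd' := rid s + 1 in
          (mkL l rd' (tvps s) [] (reading s) (rreg s) (snd tm)
               (busy s) (opcnt s) (crashed s),
           bcast n i l (Update rd' (rreg s) tm),
           [LUpd i (opcnt s - 1) tm])
        else
          (mkL l (rid s) (tvps s) rs (reading s) (rreg s) (rval s)
               (busy s) (opcnt s) (crashed s), [], [])
      else (s, [], [])
  | Update rd r t =>
      let tv' := fun r' => if r' =? r then tsv_max (tvps s r) t else tvps s r' in
      (mkL l (rid s) tv' (resps s) (reading s) (rreg s) (rval s)
           (busy s) (opcnt s) (crashed s),
       [mkM i (src m) l (Ack rd)], [])
  | Ack rd =>
      if rid s =? rd then
        let rs := set_add (EAck (src m)) (resps s) in
        if length rs =? maj n then
          (mkL l (rid s + 1) (tvps s) [] (reading s) (rreg s) (rval s)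
               false (opcnt s) (crashed s), [],
           [LResp i (opcnt s - 1) l (if reading s then Some (rval s) else None)])
        else
          (mkL l (rid s) (tvps s) rs (reading s) (rreg s) (rval s)
               (busy s) (opcnt s) (crashed s), [], [])
      else (s, [], [])
  end.

Record config := mkC { loc : nat -> lstate; net : list msg }.

Definition updf (f : nat -> lstate) (i : nat) (s : lstate) : nat -> lstate :=
  fun j => if j =? i then s else f j.

Definition init_config : config := mkC (fun _ => linit) [].

Definition crash_st (s : lstate) : lstate :=
  mkL (lt s) (rid s) (tvps s) (resps s) (reading s) (rreg s) (rval s)
      (busy s) (opcnt s) true.

Inductive step (n : nat) : config -> list label -> config -> Prop :=
| StRead c i r s' ms ls :
    1 <= i <= n -> crashed (loc c i) = false -> busy (loc c i) = false ->
    inv_read n i r (loc c i) = (s', ms, ls) ->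
    step n c ls (mkC (updf (loc c) i s') (net c ++ ms))
| StWrite c i r v s' ms ls :
    1 <= i <= n -> crashed (loc c i) = false -> busy (loc c i) = false ->
    inv_write n i r v (loc c i) = (s', ms, ls) ->
    step n c ls (mkC (updf (loc c) i s') (net c ++ ms))
| StDeliver c pre m post s' ms ls :
    net c = pre ++ m :: post ->
    crashed (loc c (dst m)) = false ->
    deliver n (dst m) (loc c (dst m)) m = (s', ms, ls) ->
    step n c ls (mkC (updf (loc c) (dst m) s') (pre ++ post ++ ms))
| StCrash c i :
    1 <= i <= n -> crashed (loc c i) = false ->
    step n c [] (mkC (updf (loc c) i (crash_st (loc c i))) (net c)).

Inductive exec (n : nat) : config -> list label -> config -> Prop :=
| ExNil c : exec n c [] c
| ExCons c ls c' tr c'' :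
    step n c ls c' -> exec n c' tr c'' -> exec n c (ls ++ tr) c''.

Definition crashed_count (n : nat) (c : config) : nat :=
  length (filter (fun i => crashed (loc c i)) (seq 1 n)).

Definition complete (tr : list label) : Prop :=
  forall p k l o, In (LInv p k l o) tr -> exists l' res, In (LResp p k l' res) tr.

Definition op_on (tr : list label) (p k x : nat) : Prop :=
  exists l o, In (LInv p k l o) tr /\ op_reg o = x.

Definition contains_update_phase (tr : list label) (p k : nat) : Prop :=
  exists t, In (LUpd p k t) tr.
Definition contains_query_phase (tr : list label) (p k : nat) : Prop :=
  In (LQry p k) tr.

Definition ts_of (tr : list label) (p k : nat) (t : ts) : Prop :=
  exists tv, In (LUpd p k tv) tr /\ fst tv = t.

(* order of events in H^lt: by logical time, ties broken by process id *)
Definition lt_before (l1 p1 l2 p2 : nat) : Prop :=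
  l1 < l2 \/ (l1 = l2 /\ p1 < p2).

Definition precedes_lt (tr : list label) (p1 k1 p2 k2 : nat) : Prop :=
  exists l1 res l2 o, In (LResp p1 k1 l1 res) tr /\ In (LInv p2 k2 l2 o) tr /\
    lt_before l1 p1 l2 p2.

(* Main.v *)
Require Import Defs.
From Stdlib Require Import Arith ZArith List Bool Lia.
Import ListNotations.


Lemma ts_le_refl a : ts_le a a.
Proof. right; reflexivity. Qed.

Lemma ts_le_iff a b : ts_le a b <-> (fst a < fst b \/ (fst a = fst b /\ snd a <= snd b)).
Proof.
  destruct a as [a1 a2], b as [b1 b2]; unfold ts_le, ts_lt; simpl; split.
  - intros [[H|[H1 H2]]|H]; [lia|lia|]. inversion H; lia.
  - intros [H|[H1 H2]]; [left; left; lia|].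
    destruct (Nat.eq_dec a2 b2); [subst; right; reflexivity| left; right; lia].
Qed.

Lemma ts_le_trans a b c : ts_le a b -> ts_le b c -> ts_le a c.
Proof. rewrite !ts_le_iff; lia. Qed.

Lemma tsv_max_l a b : ts_le (fst a) (fst (tsv_max a b)).
Proof.
  unfold tsv_max, tsv_leb, ts_ltb, ts_eqb.
  destruct a as [[a1 a2] av], b as [[b1 b2] bv]; simpl.
  destruct (a1 <? b1) eqn:E1; simpl.
  - apply ts_le_iff; simpl. apply Nat.ltb_lt in E1; lia.
  - destruct (a1 =? b1) eqn:E2; simpl.
    + destruct (a2 <? b2) eqn:E3; simpl.
      * apply ts_le_iff; simpl. apply Nat.ltb_lt in E3; apply Nat.eqb_eq in E2; lia.
      * destruct (a2 =? b2) eqn:E4; simpl.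
        -- destruct (av <=? bv)%Z; simpl; apply ts_le_iff; simpl;
           apply Nat.eqb_eq in E2; apply Nat.eqb_eq in E4; lia.
        -- apply ts_le_refl.
    + apply ts_le_refl.
Qed.

Lemma tsv_max_r a b : ts_le (fst b) (fst (tsv_max a b)).
Proof.
  unfold tsv_max, tsv_leb, ts_ltb, ts_eqb.
  destruct a as [[a1 a2] av], b as [[b1 b2] bv]; simpl.
  destruct (a1 <? b1) eqn:E1; simpl.
  - apply ts_le_refl.
  - destruct (a1 =? b1) eqn:E2; simpl.
    + destruct (a2 <? b2) eqn:E3; simpl.
      * apply ts_le_refl.
      * destruct (a2 =? b2) eqn:E4; simpl.
        -- destruct (av <=? bv)%Z; simpl; apply ts_le_iff; simpl;
           apply Nat.eqb_eq in E2; apply Nat.eqb_eq in E4; lia.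
        -- apply ts_le_iff; simpl. apply Nat.eqb_eq in E2;
           apply Nat.ltb_ge in E3; apply Nat.eqb_neq in E4; lia.
    + apply ts_le_iff; simpl. apply Nat.ltb_ge in E1; apply Nat.eqb_neq in E2; lia.
Qed.

Lemma fold_max_ge l t : ts_le (fst t) (fst (fold_left tsv_max l t)) /\
  forall u, In u l -> ts_le (fst u) (fst (fold_left tsv_max l t)).
Proof.
  revert t; induction l as [|a l IH]; intros t; simpl.
  - split; [apply ts_le_refl| tauto].
  - destruct (IH (tsv_max t a)) as [H1 H2]. split.
    + eapply ts_le_trans; [apply tsv_max_l|exact H1].
    + intros u [<-|Hu]; [eapply ts_le_trans; [apply tsv_max_r|exact H1]|auto].
Qed.

Lemma list_max_ge l u : In u l -> ts_le (fst u) (fst (list_max_tsv l)).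
Proof.
  destruct l as [|t l]; [simpl; tauto|]. simpl.
  intros [E|H]; [subst u; apply (proj1 (fold_max_ge l t))|apply (proj2 (fold_max_ge l t)); auto].
Qed.

Lemma quorum_inter n S1 S2 :
  NoDup S1 -> length S1 = maj n -> (forall q, In q S1 -> 1 <= q <= n) ->
  NoDup S2 -> length S2 = maj n -> (forall q, In q S2 -> 1 <= q <= n) ->
  exists q, In q S1 /\ In q S2.
Proof.
  intros N1 L1 R1 N2 L2 R2.
  destruct (existsb (fun q => existsb (Nat.eqb q) S2) S1) eqn:E.
  - apply existsb_exists in E as [q [Hq E]]. apply existsb_exists in E as [q' [Hq' E]].
    apply Nat.eqb_eq in E; subst; eauto.
  - exfalso.
    assert (ND : NoDup (S1 ++ S2)).
    { apply NoDup_app; auto. intros a Ha Hb.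
      assert (existsb (fun q => existsb (Nat.eqb q) S2) S1 = true); [|congruence].
      apply existsb_exists; exists a; split; auto. apply existsb_exists; exists a; split; auto.
      apply Nat.eqb_refl. }
    assert (length (S1 ++ S2) <= length (seq 1 n)).
    { apply NoDup_incl_length; auto. intros a Ha. apply in_seq.
      apply in_app_or in Ha as [Ha|Ha]; [apply R1 in Ha|apply R2 in Ha]; lia. }
    rewrite length_app, length_seq, L1, L2 in H. unfold maj in H.
    pose proof (Nat.div_mod n 2 ltac:(lia)). pose proof (Nat.mod_upper_bound n 2 ltac:(lia)). lia.
Qed.

Inductive pinfo := PQ (k l r : nat) | PU (k r : nat) (tv : tsv).
Definition pk i := match i with PQ k _ _ => k | PU k _ _ => k end.

Record arec := MkA { a_q : nat; a_p : nat; a_rd : nat; a_r : nat; a_tv : tsv; a_l : nat }.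
Record rrec := MkR { r_q : nat; r_p : nat; r_rd : nat; r_r : nat; r_l : nat; r_tv : tsv }.

Definition sender e := match e with EResp _ j => j | EAck j => j end.

Definition tok q p rd (m : msg) : bool :=
  match pl m with
  | Query rd' _ => (src m =? p) && (dst m =? q) && (rd' =? rd)
  | Response rd' _ => (src m =? q) && (dst m =? p) && (rd' =? rd)
  | _ => false end.
Definition isER q (e : entry) : bool := match e with EResp _ j => j =? q | _ => false end.

Definition quorum n S := NoDup S /\ length S = maj n /\ forall q, In q S -> 1 <= q <= n.

Definition ghost := nat -> nat -> option pinfo.

Definition netok n (g : ghost) A R (m : msg) : Prop :=
  match pl m with
  | Query rd r => 1 <= src m <= n /\ 1 <= dst m <= n /\ exists k, g (src m) rd = Some (PQ k (mlt m) r)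
  | Response rd tv => 1 <= src m <= n /\ exists r, In (MkR (src m) (dst m) rd r (mlt m) tv) R
  | Update rd r tv => 1 <= dst m <= n /\ exists k, g (src m) rd = Some (PU k r tv)
  | Ack rd => 1 <= src m <= n /\ exists r tv, In (MkA (src m) (dst m) rd r tv (mlt m)) A
  end.

Definition entok n (A : list arec) (R : list rrec) p (s : lstate) e := match e with
  | EResp tv q => 1 <= q <= n /\ exists r lr, In (MkR q p (rid s) r lr tv) R
  | EAck q => 1 <= q <= n /\ exists r tv la, la < lt s /\ In (MkA q p (rid s) r tv la) A end.

Definition lp lab := match lab with LInv p _ _ _ => p | LResp p _ _ _ => p | LQry p _ => p | LUpd p _ _ => p end.
Definition lk lab := match lab with LInv _ k _ _ => k | LResp _ k _ _ => k | LQry _ k => k | LUpd _ k _ => k end.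

Record Inv n c tr (g : ghost) A R : Prop := {
  iG1 : forall p rd i, g p rd = Some i -> rd <= rid (loc c p) /\ pk i < opcnt (loc c p);
  iG2 : forall p, busy (loc c p) = false -> g p (rid (loc c p)) = None /\ resps (loc c p) = [];
  iG3 : forall p i, g p (rid (loc c p)) = Some i -> busy (loc c p) = true /\ pk i = opcnt (loc c p) - 1 /\
        (forall k l r, i = PQ k l r -> rreg (loc c p) = r);
  iG4 : forall p e, In e (resps (loc c p)) -> entok n A R p (loc c p) e;
  iG5 : forall p, NoDup (map sender (resps (loc c p)));
  iCNT : forall q p rd, length (filter (tok q p rd) (net c)) +
        (if rid (loc c p) =? rd then length (filter (isER q) (resps (loc c p))) else 0) <= 1;
  iRA : forall a, In a A -> a_l a <= lt (loc c (a_q a)) /\ ts_le (fst (a_tv a)) (fst (tvps (loc c (a_q a)) (a_r a))) /\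
        exists k, g (a_p a) (a_rd a) = Some (PU k (a_r a) (a_tv a));
  iRR : forall s, In s R -> r_l s <= lt (loc c (r_q s)) /\ exists k l, g (r_p s) (r_rd s) = Some (PQ k l (r_r s)) /\ l < r_l s;
  iRAR : forall a s, In a A -> In s R -> a_q a = r_q s -> a_r a = r_r s -> a_l a < r_l s -> ts_le (fst (a_tv a)) (fst (r_tv s));
  iNET : forall m, In m (net c) -> netok n g A R m;
  iLK : forall lab, In lab tr -> lk lab < opcnt (loc c (lp lab));
  iLInvU : forall p k l o l' o', In (LInv p k l o) tr -> In (LInv p k l' o') tr -> l = l' /\ o = o';
  iGL1 : forall p rd k l r, g p rd = Some (PQ k l r) -> In (LInv p k l (ORead r)) tr;
  iGL2 : forall p rd k r tv, g p rd = Some (PU k r tv) -> exists l o, In (LInv p k l o) tr /\ op_reg o = r;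
  iGU : forall p rd rd' k r r' tv tv', g p rd = Some (PU k r tv) -> g p rd' = Some (PU k r' tv') -> rd = rd';
  iGQU : forall p rd rd' k l r l' r', g p rd = Some (PQ k l r) -> g p rd' = Some (PQ k l' r') -> rd = rd';
  iGQB : forall p rd rd' k l r r' tv, g p rd = Some (PQ k l r) -> g p rd' = Some (PU k r' tv) -> rd < rd';
  iLQ : forall p k, In (LQry p k) tr -> exists rd l r, g p rd = Some (PQ k l r);
  iLU : forall p k tv, In (LUpd p k tv) tr -> exists rd r, g p rd = Some (PU k r tv);
  iLUR : forall p k tv rd l r, In (LUpd p k tv) tr -> g p rd = Some (PQ k l r) ->
        exists S, quorum n S /\ forall q, In q S -> exists lr tvq, l < lr /\ In (MkR q p rd r lr tvq) R /\ ts_le (fst tvq) (fst tv);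
  iLR : forall p k l res, In (LResp p k l res) tr -> exists rd r tv, g p rd = Some (PU k r tv) /\
        exists S, quorum n S /\ forall q, In q S -> exists la, la < l /\ In (MkA q p rd r tv la) A
}.

Lemma inv_init n : Inv n init_config [] (fun _ _ => None) [] [].
Proof.
  constructor; simpl; try tauto; try discriminate; try (intros; discriminate).
  all: idtac "GOALS"; try (intros; constructor); try (intros q p rd; destruct (0 =? rd); simpl; lia).
  all: destruct rd; simpl; lia.
Qed.

Lemma inv_final n c tr g A R x p1 k1 p2 k2 :
  Inv n c tr g A R ->
  op_on tr p1 k1 x -> op_on tr p2 k2 x ->
  contains_query_phase tr p2 k2 ->
  precedes_lt tr p1 k1 p2 k2 ->
  forall t1 t2, ts_of tr p1 k1 t1 -> ts_of tr p2 k2 t2 -> ts_le t1 t2.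
Proof.
  intros I [lx1 [ox1 [Hx1 Ex1]]] [lx2 [ox2 [Hx2 Ex2]]] HQ [l1 [res [l2 [o [HR [HI Hlt]]]]]]
    t1 t2 [tv1 [HU1 E1]] [tv2 [HU2 E2]]. subst t1 t2.
  destruct (iLU _ _ _ _ _ _ I _ _ _ HU1) as [rd1 [r1 G1]].
  destruct (iLR _ _ _ _ _ _ I _ _ _ _ HR) as [rd [r [tv [G [S1 [Q1 HS1]]]]]].
  pose proof (iGU _ _ _ _ _ _ I _ _ _ _ _ _ _ _ G1 G) as <-. rewrite G1 in G; inversion G; subst r tv.
  destruct (iGL2 _ _ _ _ _ _ I _ _ _ _ _ G1) as [l1' [o1' [HI1 Er1]]].
  destruct (iLInvU _ _ _ _ _ _ I _ _ _ _ _ _ Hx1 HI1) as [_ Eo]. subst ox1. rewrite Ex1 in Er1; subst r1.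
  destruct (iLQ _ _ _ _ _ _ I _ _ HQ) as [rd2 [l2' [r2 G2]]].
  pose proof (iGL1 _ _ _ _ _ _ I _ _ _ _ _ G2) as HI2.
  destruct (iLInvU _ _ _ _ _ _ I _ _ _ _ _ _ HI HI2) as [El Eo]. subst l2' o.
  destruct (iLInvU _ _ _ _ _ _ I _ _ _ _ _ _ Hx2 HI2) as [_ Eo]. subst ox2. simpl in Ex2; subst r2.
  destruct (iLUR _ _ _ _ _ _ I _ _ _ _ _ _ HU2 G2) as [S2 [Q2 HS2]].
  destruct Q1 as [N1 [L1 R1]], Q2 as [N2 [L2 R2]].
  destruct (quorum_inter n S1 S2 N1 L1 R1 N2 L2 R2) as [q [Hq1 Hq2]].
  destruct (HS1 q Hq1) as [la [Hla HA]].
  destruct (HS2 q Hq2) as [lr [tvq [Hlr [HRr Hle]]]].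
  eapply ts_le_trans; [|exact Hle].
  apply (iRAR _ _ _ _ _ _ I _ _ HA HRr); simpl; auto.
  unfold lt_before in Hlt; lia.
Qed.

Definition gset (g : ghost) i rd0 v : ghost :=
  fun p rd => if (p =? i) && (rd =? rd0) then Some v else g p rd.

Lemma gset_inv g i rd0 v p rd x : gset g i rd0 v p rd = Some x ->
  (p = i /\ rd = rd0 /\ x = v) \/ g p rd = Some x.
Proof.
  unfold gset. destruct (p =? i) eqn:E1, (rd =? rd0) eqn:E2; simpl; auto.
  intros H; inversion H; left; apply Nat.eqb_eq in E1, E2; auto.
Qed.

Lemma gset_new g i rd0 v : gset g i rd0 v i rd0 = Some v.
Proof. unfold gset; rewrite !Nat.eqb_refl; reflexivity. Qed.

Lemma gset_old g i rd0 v p rd x : g i rd0 = None -> g p rd = Some x -> gset g i rd0 v p rd = Some x.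
Proof.
  unfold gset. destruct (p =? i) eqn:E1, (rd =? rd0) eqn:E2; simpl; auto.
  apply Nat.eqb_eq in E1, E2; subst; congruence.
Qed.

Lemma gset_other g i rd0 v p rd : p <> i -> gset g i rd0 v p rd = g p rd.
Proof. unfold gset. intros H; apply Nat.eqb_neq in H; rewrite H; reflexivity. Qed.

Lemma gset_other2 g i rd0 v p rd : rd <> rd0 -> gset g i rd0 v p rd = g p rd.
Proof. unfold gset. intros H; apply Nat.eqb_neq in H; rewrite H, andb_false_r; reflexivity. Qed.

Lemma updf_eq f i s : updf f i s i = s.
Proof. unfold updf; rewrite Nat.eqb_refl; reflexivity. Qed.
Lemma updf_neq f i s p : p <> i -> updf f i s p = f p.
Proof. unfold updf; intros H; apply Nat.eqb_neq in H; rewrite H; reflexivity. Qed.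

Definition mono (f f' : nat -> lstate) := forall p, lt (f p) <= lt (f' p) /\ rid (f p) <= rid (f' p) /\
  opcnt (f p) <= opcnt (f' p) /\ forall r, ts_le (fst (tvps (f p) r)) (fst (tvps (f' p) r)).

Definition gext (g g' : ghost) := forall p rd x, g p rd = Some x -> g' p rd = Some x.

Lemma mono_updf f i s : lt (f i) <= lt s -> rid (f i) <= rid s -> opcnt (f i) <= opcnt s ->
  (forall r, ts_le (fst (tvps (f i) r)) (fst (tvps s r))) -> mono f (updf f i s).
Proof.
  intros; intros p. destruct (Nat.eq_dec p i) as [->|Hne].
  - rewrite updf_eq; auto.
  - rewrite updf_neq by auto. repeat split; auto. intros; apply ts_le_refl.
Qed.

Section Frame.
Variables (n : nat) (c c' : config) (tr tr' : list label) (g g' : ghost) (A A' : list arec) (R R' : list rrec).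
Hypothesis I : Inv n c tr g A R.
Hypothesis M : mono (loc c) (loc c').
Hypothesis Gx : gext g g'.
Hypothesis Ax : incl A A'.
Hypothesis Rx : incl R R'.
Hypothesis Tx : incl tr tr'.

Lemma fr_RA a : In a A -> a_l a <= lt (loc c' (a_q a)) /\ ts_le (fst (a_tv a)) (fst (tvps (loc c' (a_q a)) (a_r a))) /\
        exists k, g' (a_p a) (a_rd a) = Some (PU k (a_r a) (a_tv a)).
Proof.
  intros H. destruct (iRA _ _ _ _ _ _ I a H) as [H1 [H2 [k H3]]]. destruct (M (a_q a)) as [M1 [_ [_ M4]]].
  repeat split; [lia| eapply ts_le_trans; eauto| eauto].
Qed.

Lemma fr_RR s : In s R -> r_l s <= lt (loc c' (r_q s)) /\ exists k l, g' (r_p s) (r_rd s) = Some (PQ k l (r_r s)) /\ l < r_l s.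
Proof.
  intros H. destruct (iRR _ _ _ _ _ _ I s H) as [H1 [k [l [H2 H3]]]]. destruct (M (r_q s)) as [M1 _].
  split; [lia|eauto].
Qed.

Lemma fr_RAR : forall a s, In a A -> In s R -> a_q a = r_q s -> a_r a = r_r s -> a_l a < r_l s -> ts_le (fst (a_tv a)) (fst (r_tv s)).
Proof. apply (iRAR _ _ _ _ _ _ I). Qed.

Lemma fr_netok m : netok n g A R m -> netok n g' A' R' m.
Proof.
  unfold netok. destruct (pl m).
  - intros [? [? [k ?]]]; eauto.
  - intros [? [r ?]]; eauto.
  - intros [? [k ?]]; eauto.
  - intros [? [r [tv ?]]]; eauto.
Qed.

Lemma fr_LK lab : In lab tr -> lk lab < opcnt (loc c' (lp lab)).
Proof. intros H. pose proof (iLK _ _ _ _ _ _ I lab H). destruct (M (lp lab)) as [_ [_ [M3 _]]]. lia. Qed.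

Lemma fr_GL1 p rd k l r : g p rd = Some (PQ k l r) -> In (LInv p k l (ORead r)) tr'.
Proof. intros H; apply Tx; eapply (iGL1 _ _ _ _ _ _ I); eauto. Qed.

Lemma fr_GL2 p rd k r tv : g p rd = Some (PU k r tv) -> exists l o, In (LInv p k l o) tr' /\ op_reg o = r.
Proof. intros H; destruct (iGL2 _ _ _ _ _ _ I _ _ _ _ _ H) as [l [o [H1 H2]]]; eauto. Qed.

Lemma fr_LQ p k : In (LQry p k) tr -> exists rd l r, g' p rd = Some (PQ k l r).
Proof. intros H; destruct (iLQ _ _ _ _ _ _ I _ _ H) as [rd [l [r H1]]]; eauto. Qed.

Lemma fr_LU p k tv : In (LUpd p k tv) tr -> exists rd r, g' p rd = Some (PU k r tv).
Proof. intros H; destruct (iLU _ _ _ _ _ _ I _ _ _ H) as [rd [r H1]]; eauto. Qed.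

Lemma fr_LUR p k tv rd l r : In (LUpd p k tv) tr -> g p rd = Some (PQ k l r) ->
        exists S, quorum n S /\ forall q, In q S -> exists lr tvq, l < lr /\ In (MkR q p rd r lr tvq) R' /\ ts_le (fst tvq) (fst tv).
Proof.
  intros H1 H2; destruct (iLUR _ _ _ _ _ _ I _ _ _ _ _ _ H1 H2) as [S [Q HS]].
  exists S; split; auto. intros q Hq; destruct (HS q Hq) as [lr [tvq [? [? ?]]]]; eauto 7.
Qed.

Lemma fr_LR p k l res : In (LResp p k l res) tr -> exists rd r tv, g' p rd = Some (PU k r tv) /\
        exists S, quorum n S /\ forall q, In q S -> exists la, la < l /\ In (MkA q p rd r tv la) A'.
Proof.
  intros H1; destruct (iLR _ _ _ _ _ _ I _ _ _ _ H1) as [rd [r [tv [H2 [S [Q HS]]]]]].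
  exists rd, r, tv; split; auto. exists S; split; auto. intros q Hq; destruct (HS q Hq) as [la [? ?]]; eauto.
Qed.
End Frame.

Lemma filter_app_len {X} (f : X -> bool) l1 l2 : length (filter f (l1 ++ l2)) = length (filter f l1) + length (filter f l2).
Proof. rewrite filter_app, length_app; reflexivity. Qed.

Lemma filter_nil' {X} (f : X -> bool) l : (forall x, In x l -> f x = false) -> filter f l = [].
Proof. induction l as [|a l IH]; simpl; auto. intros H; rewrite H by auto; auto. Qed.

Lemma fresh_tok n c tr g A R q p rd : Inv n c tr g A R -> rid (loc c p) < rd -> filter (tok q p rd) (net c) = [].
Proof.
  intros I Hrd. apply filter_nil'. intros m Hm.
  destruct (tok q p rd m) eqn:E; auto. exfalso.
  pose proof (iNET _ _ _ _ _ _ I m Hm) as N. unfold tok, netok in *.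
  destruct (pl m); try discriminate.
  - apply andb_prop in E as [E E3]; apply andb_prop in E as [E1 E2]. apply Nat.eqb_eq in E1, E3; subst.
    destruct N as [_ [_ [k Hg]]]. destruct (iG1 _ _ _ _ _ _ I _ _ _ Hg). lia.
  - apply andb_prop in E as [E E3]; apply andb_prop in E as [E1 E2]. apply Nat.eqb_eq in E2, E3; subst.
    destruct N as [_ [r Hr]]. destruct (iRR _ _ _ _ _ _ I _ Hr) as [_ [k [l [Hg _]]]]. simpl in Hg.
    destruct (iG1 _ _ _ _ _ _ I _ _ _ Hg). lia.
Qed.

Lemma filter_eqb_nodup l q : NoDup l -> length (filter (fun j => j =? q) l) <= 1.
Proof.
  induction 1 as [|a l Ha ND IH]; simpl; [lia|].
  destruct (a =? q) eqn:E; simpl; [|auto].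
  apply Nat.eqb_eq in E; subst.
  assert (filter (fun j => j =? q) l = []) as ->; [|simpl; lia].
  apply filter_nil'. intros x Hx. destruct (x =? q) eqn:E; auto.
  apply Nat.eqb_eq in E; subst; contradiction.
Qed.

Lemma bcast_tok_query n i l rd0 r q p rd :
  length (filter (tok q p rd) (bcast n i l (Query rd0 r))) <= (if (p =? i) && (rd =? rd0) then 1 else 0).
Proof.
  unfold bcast. rewrite filter_map_swap. rewrite length_map. unfold tok; simpl.
  destruct (i =? p) eqn:E1, (rd0 =? rd) eqn:E2; simpl;
  rewrite (Nat.eqb_sym p i), (Nat.eqb_sym rd rd0), E1, E2; simpl.
  - erewrite filter_ext; [apply filter_eqb_nodup, seq_NoDup|]. intros; apply andb_true_r.
  - rewrite filter_nil'; simpl; auto. intros; apply andb_false_r.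
  - rewrite filter_nil'; simpl; auto.
  - rewrite filter_nil'; simpl; auto.
Qed.

Lemma bcast_tok_update n i l rd0 r tv q p rd :
  filter (tok q p rd) (bcast n i l (Update rd0 r tv)) = [].
Proof. unfold bcast. rewrite filter_map_swap. simpl. rewrite filter_nil'; auto. Qed.

Lemma in_bcast n i l pl0 m : In m (bcast n i l pl0) -> src m = i /\ 1 <= dst m <= n /\ mlt m = l /\ pl m = pl0.
Proof.
  unfold bcast; intros H; apply in_map_iff in H as [j [<- Hj]]; apply in_seq in Hj; simpl; repeat split; lia.
Qed.

Lemma inv_same n c c' tr g A R :
 Inv n c tr g A R ->
 (forall p, lt (loc c' p) = lt (loc c p)) ->
 (forall p, rid (loc c' p) = rid (loc c p)) ->
 (forall p, tvps (loc c' p) = tvps (loc c p)) ->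
 (forall p, resps (loc c' p) = resps (loc c p)) ->
 (forall p, busy (loc c' p) = busy (loc c p)) ->
 (forall p, opcnt (loc c' p) = opcnt (loc c p)) ->
 (forall p, rreg (loc c' p) = rreg (loc c p)) ->
 incl (net c') (net c) ->
 (forall q p rd, length (filter (tok q p rd) (net c')) <= length (filter (tok q p rd) (net c))) ->
 Inv n c' tr g A R.
Proof.
  intros I E1 E2 E3 E4 E5 E6 E7 Hn Hc.
  constructor; intros; unfold entok; rewrite ?E1, ?E2, ?E3, ?E4, ?E5, ?E6, ?E7 in *.
  all: try solve [eapply I; eauto].
  all: try solve [eapply (iGU _ _ _ _ _ _ I); eauto | eapply (iGQU _ _ _ _ _ _ I); eauto].
  - pose proof (iCNT _ _ _ _ _ _ I q p rd). specialize (Hc q p rd). lia.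
Qed.

Lemma inv_crash n c i tr g A R : Inv n c tr g A R ->
  Inv n (mkC (updf (loc c) i (crash_st (loc c i))) (net c)) tr g A R.
Proof.
  intros I; apply (inv_same _ _ _ _ _ _ _ I); simpl; intros;
  try (unfold updf; destruct (p =? i) eqn:E; [apply Nat.eqb_eq in E; subst|]; reflexivity).
  apply incl_refl.
Qed.

Lemma inv_drop n c tr g A R pre m post : Inv n c tr g A R -> net c = pre ++ m :: post ->
  Inv n (mkC (updf (loc c) (dst m) (loc c (dst m))) (pre ++ post)) tr g A R.
Proof.
  intros I Hn; apply (inv_same _ _ _ _ _ _ _ I); simpl; intros;
  try (unfold updf; destruct (p =? dst m) eqn:E; [apply Nat.eqb_eq in E; subst|]; reflexivity).
  - rewrite Hn; intros x Hx; apply in_or_app; apply in_app_or in Hx as [?|?]; simpl; auto.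
  - rewrite Hn, !filter_app_len; simpl. destruct (tok q p rd m); simpl; lia.
Qed.

Ltac caseproc p i := destruct (Nat.eq_dec p i) as [->|?Hne]; [rewrite ?updf_eq | rewrite ?updf_neq by auto]; simpl.

Lemma g_none n c tr g A R p rd : Inv n c tr g A R -> rid (loc c p) < rd -> g p rd = None.
Proof.
  intros I H. destruct (g p rd) eqn:E; auto. destruct (iG1 _ _ _ _ _ _ I _ _ _ E); lia.
Qed.

Lemma inv_read n c tr g A R i r s' ms ls : Inv n c tr g A R -> 1 <= i <= n -> busy (loc c i) = false ->
  inv_read n i r (loc c i) = (s', ms, ls) ->
  Inv n (mkC (updf (loc c) i s') (net c ++ ms)) (tr ++ ls)
      (gset g i (rid (loc c i) + 1) (PQ (opcnt (loc c i)) (lt (loc c i) + 1) r)) A R.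
Proof.
  intros I Hi Hb H. unfold inv_read in H. inversion H; subst; clear H.
  destruct (iG2 _ _ _ _ _ _ I i Hb) as [Gi Ri].
  set (s := loc c i) in *.
  set (g' := gset g i (rid s + 1) (PQ (opcnt s) (lt s + 1) r)).
  assert (G0 : g i (rid s + 1) = None) by (apply (g_none _ _ _ _ _ _ _ _ I); unfold s; lia).
  assert (Gx : gext g g') by (intros p rd x Hx; apply gset_old; auto).
  set (s' := {| lt := lt s + 1; rid := rid s + 1; tvps := tvps s; resps := resps s; reading := true;
         rreg := r; rval := rval s; busy := true; opcnt := opcnt s + 1; crashed := crashed s |}).
  set (c' := {| loc := updf (loc c) i s'; net := net c ++ bcast n i (lt s + 1) (Query (rid s + 1) r) |}).
  set (tr' := tr ++ [LInv i (opcnt s) (lt s + 1) (ORead r); LQry i (opcnt s)]).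
  assert (M : mono (loc c) (loc c')) by (apply mono_updf; unfold s', s; simpl; try lia; intros; apply ts_le_refl).
  assert (Tx : incl tr tr') by (intros x Hx; apply in_or_app; auto).
  assert (Hnew : forall lab, In lab tr' -> In lab tr \/ lab = LInv i (opcnt s) (lt s + 1) (ORead r) \/ lab = LQry i (opcnt s)).
  { intros lab Hl. apply in_app_or in Hl as [Hl|[Hl|[Hl|[]]]]; auto. }
  pose proof (fr_RA n c c' tr g g' A R I M Gx) as FRA.
  pose proof (fr_RR n c c' tr g g' A R I M Gx) as FRR.
  change (Inv n c' tr' g' A R).
  constructor.
  - intros p rd x Hx. apply gset_inv in Hx as [[-> [-> ->]]|Hx].
    + unfold c'; simpl; rewrite updf_eq; simpl; lia.
    + destruct (iG1 _ _ _ _ _ _ I _ _ _ Hx). destruct (M p) as [_ [? [? _]]]. lia.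
  - intros p. unfold c'; simpl. caseproc p i; [discriminate|].
    intros Hb'. destruct (iG2 _ _ _ _ _ _ I p Hb'). unfold g'; rewrite gset_other; auto.
  - intros p x. unfold c'; simpl. caseproc p i.
    + unfold g'; rewrite gset_new. intros Hx; inversion Hx; subst. simpl. repeat split; try lia.
      intros k l r0 E; inversion E; auto.
    + unfold g'; rewrite gset_other by auto. apply (iG3 _ _ _ _ _ _ I).
  - intros p e. unfold c'; simpl. caseproc p i.
    + fold s; rewrite Ri; simpl; tauto.
    + apply (iG4 _ _ _ _ _ _ I).
  - intros p. unfold c'; simpl. caseproc p i.
    + fold s; rewrite Ri; constructor.
    + apply (iG5 _ _ _ _ _ _ I).
  - intros q p rd. unfold c'; simpl. rewrite filter_app_len.
    pose proof (bcast_tok_query n i (lt s + 1) (rid s + 1) r q p rd) as B.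
    pose proof (iCNT _ _ _ _ _ _ I q p rd) as C.
    caseproc p i.
    + rewrite Nat.eqb_refl in B. fold s in C |- *. rewrite Ri in *; simpl in *.
      destruct (rd =? rid s + 1) eqn:E.
      * apply Nat.eqb_eq in E; subst. rewrite (fresh_tok _ _ _ _ _ _ q i (rid s + 1) I) by (unfold s; lia).
        rewrite Nat.eqb_refl. simpl. lia.
      * rewrite Nat.eqb_sym, E. destruct (rid s =? rd); lia.
    + apply Nat.eqb_neq in Hne. rewrite Hne in B. simpl in B. lia.
  - apply FRA.
  - apply FRR.
  - apply (iRAR _ _ _ _ _ _ I).
  - intros m Hm. unfold c' in Hm; simpl in Hm. apply in_app_or in Hm as [Hm|Hm].
    + eapply fr_netok; [exact Gx| apply incl_refl| apply incl_refl| apply (iNET _ _ _ _ _ _ I _ Hm)].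
    + apply in_bcast in Hm as [E1 [E2 [E3 E4]]]. unfold netok. rewrite E4, E1, E3.
      repeat split; try lia. exists (opcnt s). unfold g'; apply gset_new.
  - intros lab Hl. apply Hnew in Hl as [Hl|[ -> | -> ]].
    + eapply fr_LK; eauto.
    + unfold c'; simpl. rewrite updf_eq; simpl; lia.
    + unfold c'; simpl. rewrite updf_eq; simpl; lia.
  - intros p k l o l' o' H1 H2.
    apply Hnew in H1 as [H1|[H1|H1]]; apply Hnew in H2 as [H2|[H2|H2]]; try discriminate.
    + eapply (iLInvU _ _ _ _ _ _ I); eauto.
    + inversion H2; subst. pose proof (iLK _ _ _ _ _ _ I _ H1) as X; simpl in X. fold s in X. lia.
    + inversion H1; subst. pose proof (iLK _ _ _ _ _ _ I _ H2) as X; simpl in X. fold s in X. lia.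
    + inversion H1; inversion H2; subst; auto.
  - intros p rd k l r0 Hx. apply gset_inv in Hx as [[-> [-> Hx]]|Hx].
    + inversion Hx; subst. apply in_or_app; simpl; auto.
    + eapply fr_GL1; eauto.
  - intros p rd k r0 tv Hx. apply gset_inv in Hx as [[-> [-> Hx]]|Hx]; [discriminate|].
    eapply fr_GL2; eauto.
  - intros p rd rd' k r0 r' tv tv' H1 H2.
    apply gset_inv in H1 as [[_ [_ H1]]|H1]; [discriminate|].
    apply gset_inv in H2 as [[_ [_ H2]]|H2]; [discriminate|].
    eapply (iGU _ _ _ _ _ _ I); eauto.
  - intros p rd rd' k l r0 l' r' H1 H2.
    apply gset_inv in H1 as [[-> [-> H1]]|H1]; apply gset_inv in H2 as [[E1 [-> H2]]|H2].
    + auto.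
    + inversion H1; subst. destruct (iG1 _ _ _ _ _ _ I _ _ _ H2) as [_ X]; simpl in X; fold s in X; lia.
    + inversion H2; subst. destruct (iG1 _ _ _ _ _ _ I _ _ _ H1) as [_ X]; simpl in X; fold s in X; lia.
    + eapply (iGQU _ _ _ _ _ _ I); eauto.
  - intros p rd rd' k l r0 r' tv H1 H2.
    apply gset_inv in H2 as [[_ [_ H2]]|H2]; [discriminate|].
    apply gset_inv in H1 as [[-> [-> H1]]|H1].
    + inversion H1; subst. destruct (iG1 _ _ _ _ _ _ I _ _ _ H2) as [_ X]; simpl in X; fold s in X; lia.
    + eapply (iGQB _ _ _ _ _ _ I); eauto.
  - intros p k Hl. apply Hnew in Hl as [Hl|[Hl|Hl]]; [eapply fr_LQ; eauto|discriminate|].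
    inversion Hl; subst. exists (rid s + 1), (lt s + 1), r. apply gset_new.
  - intros p k tv Hl. apply Hnew in Hl as [Hl|[Hl|Hl]]; try discriminate. eapply fr_LU; eauto.
  - intros p k tv rd l r0 Hl Hx. apply Hnew in Hl as [Hl|[Hl|Hl]]; try discriminate.
    apply gset_inv in Hx as [[-> [-> Hx]]|Hx].
    + inversion Hx; subst. pose proof (iLK _ _ _ _ _ _ I _ Hl) as X; simpl in X; fold s in X; lia.
    + eapply fr_LUR; eauto. apply incl_refl.
  - intros p k l res Hl. apply Hnew in Hl as [Hl|[Hl|Hl]]; try discriminate. eapply fr_LR; eauto. apply incl_refl.
Qed.

Lemma inv_write n c tr g A R i r v s' ms ls : Inv n c tr g A R -> 1 <= i <= n -> busy (loc c i) = false ->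
  inv_write n i r v (loc c i) = (s', ms, ls) ->
  Inv n (mkC (updf (loc c) i s') (net c ++ ms)) (tr ++ ls)
      (gset g i (rid (loc c i) + 1) (PU (opcnt (loc c i)) r ((lt (loc c i) + 1, i), v))) A R.
Proof.
  intros I Hi Hb H. unfold inv_write in H. inversion H; subst; clear H.
  destruct (iG2 _ _ _ _ _ _ I i Hb) as [Gi Ri].
  set (s := loc c i) in *.
  set (tv := ((lt s + 1, i), v) : tsv).
  set (g' := gset g i (rid s + 1) (PU (opcnt s) r tv)).
  assert (G0 : g i (rid s + 1) = None) by (apply (g_none _ _ _ _ _ _ _ _ I); unfold s; lia).
  assert (Gx : gext g g') by (intros p rd x Hx; apply gset_old; auto).
  set (s' := {| lt := lt s + 1; rid := rid s + 1; tvps := tvps s; resps := resps s; reading := false;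
         rreg := rreg s; rval := rval s; busy := true; opcnt := opcnt s + 1; crashed := crashed s |}).
  set (c' := {| loc := updf (loc c) i s'; net := net c ++ bcast n i (lt s + 1) (Update (rid s + 1) r tv) |}).
  set (tr' := tr ++ [LInv i (opcnt s) (lt s + 1) (OWrite r v); LUpd i (opcnt s) tv]).
  assert (M : mono (loc c) (loc c')) by (apply mono_updf; unfold s', s; simpl; try lia; intros; apply ts_le_refl).
  assert (Tx : incl tr tr') by (intros x Hx; apply in_or_app; auto).
  assert (Hnew : forall lab, In lab tr' -> In lab tr \/ lab = LInv i (opcnt s) (lt s + 1) (OWrite r v) \/ lab = LUpd i (opcnt s) tv).
  { intros lab Hl. apply in_app_or in Hl as [Hl|[Hl|[Hl|[]]]]; auto. }
  pose proof (fr_RA n c c' tr g g' A R I M Gx) as FRA.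
  pose proof (fr_RR n c c' tr g g' A R I M Gx) as FRR.
  change (Inv n c' tr' g' A R).
  constructor.
  - intros p rd x Hx. apply gset_inv in Hx as [[-> [-> ->]]|Hx].
    + unfold c'; simpl; rewrite updf_eq; simpl; lia.
    + destruct (iG1 _ _ _ _ _ _ I _ _ _ Hx). destruct (M p) as [_ [? [? _]]]. lia.
  - intros p. unfold c'; simpl. caseproc p i; [discriminate|].
    intros Hb'. destruct (iG2 _ _ _ _ _ _ I p Hb'). unfold g'; rewrite gset_other; auto.
  - intros p x. unfold c'; simpl. caseproc p i.
    + unfold g'; rewrite gset_new. intros Hx; inversion Hx; subst. simpl. repeat split; try lia.
      intros k l r0 E; inversion E.
    + unfold g'; rewrite gset_other by auto. apply (iG3 _ _ _ _ _ _ I).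
  - intros p e. unfold c'; simpl. caseproc p i.
    + fold s; rewrite Ri; simpl; tauto.
    + apply (iG4 _ _ _ _ _ _ I).
  - intros p. unfold c'; simpl. caseproc p i.
    + fold s; rewrite Ri; constructor.
    + apply (iG5 _ _ _ _ _ _ I).
  - intros q p rd. unfold c'; simpl. rewrite filter_app_len, bcast_tok_update. simpl.
    pose proof (iCNT _ _ _ _ _ _ I q p rd) as C.
    caseproc p i.
    + fold s in C |- *. rewrite Ri in *; simpl in *.
      destruct (rid s + 1 =? rd) eqn:E.
      * apply Nat.eqb_eq in E; subst. rewrite (fresh_tok _ _ _ _ _ _ q i (rid s + 1) I) by (unfold s; lia).
        simpl. lia.
      * destruct (rid s =? rd); lia.
    + lia.
  - apply FRA.
  - apply FRR.
  - apply (iRAR _ _ _ _ _ _ I).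
  - intros m Hm. unfold c' in Hm; simpl in Hm. apply in_app_or in Hm as [Hm|Hm].
    + eapply fr_netok; [exact Gx| apply incl_refl| apply incl_refl| apply (iNET _ _ _ _ _ _ I _ Hm)].
    + apply in_bcast in Hm as [E1 [E2 [E3 E4]]]. unfold netok. rewrite E4, E1.
      repeat split; try lia. exists (opcnt s). unfold g'; apply gset_new.
  - intros lab Hl. apply Hnew in Hl as [Hl|[ -> | -> ]].
    + eapply fr_LK; eauto.
    + unfold c'; simpl. rewrite updf_eq; simpl; lia.
    + unfold c'; simpl. rewrite updf_eq; simpl; lia.
  - intros p k l o l' o' H1 H2.
    apply Hnew in H1 as [H1|[H1|H1]]; apply Hnew in H2 as [H2|[H2|H2]]; try discriminate.
    + eapply (iLInvU _ _ _ _ _ _ I); eauto.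
    + inversion H2; subst. pose proof (iLK _ _ _ _ _ _ I _ H1) as X; simpl in X. fold s in X. lia.
    + inversion H1; subst. pose proof (iLK _ _ _ _ _ _ I _ H2) as X; simpl in X. fold s in X. lia.
    + inversion H1; inversion H2; subst; auto.
  - intros p rd k l r0 Hx. apply gset_inv in Hx as [[-> [-> Hx]]|Hx]; [discriminate|].
    eapply fr_GL1; eauto.
  - intros p rd k r0 tv0 Hx. apply gset_inv in Hx as [[-> [-> Hx]]|Hx].
    + inversion Hx; subst. exists (lt s + 1), (OWrite r v). split; auto. apply in_or_app; simpl; auto.
    + eapply fr_GL2; eauto.
  - intros p rd rd' k r0 r' tv0 tv' H1 H2.
    apply gset_inv in H1 as [[-> [-> H1]]|H1]; apply gset_inv in H2 as [[E1 [-> H2]]|H2].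
    + auto.
    + inversion H1; subst. destruct (iG1 _ _ _ _ _ _ I _ _ _ H2) as [_ X]; simpl in X; fold s in X; lia.
    + inversion H2; subst. destruct (iG1 _ _ _ _ _ _ I _ _ _ H1) as [_ X]; simpl in X; fold s in X; lia.
    + eapply (iGU _ _ _ _ _ _ I); eauto.
  - intros p rd rd' k l r0 l' r' H1 H2.
    apply gset_inv in H1 as [[_ [_ H1]]|H1]; [discriminate|].
    apply gset_inv in H2 as [[_ [_ H2]]|H2]; [discriminate|].
    eapply (iGQU _ _ _ _ _ _ I); eauto.
  - intros p rd rd' k l r0 r' tv0 H1 H2.
    apply gset_inv in H1 as [[_ [_ H1]]|H1]; [discriminate|].
    apply gset_inv in H2 as [[-> [-> H2]]|H2].
    + inversion H2; subst. destruct (iG1 _ _ _ _ _ _ I _ _ _ H1) as [_ X]; simpl in X; fold s in X; lia.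
    + eapply (iGQB _ _ _ _ _ _ I); eauto.
  - intros p k Hl. apply Hnew in Hl as [Hl|[Hl|Hl]]; try discriminate. eapply fr_LQ; eauto.
  - intros p k tv0 Hl. apply Hnew in Hl as [Hl|[Hl|Hl]]; [eapply fr_LU; eauto|discriminate|].
    inversion Hl; subst. exists (rid s + 1), r. apply gset_new.
  - intros p k tv0 rd l r0 Hl Hx.
    apply gset_inv in Hx as [[-> [-> Hx]]|Hx]; [discriminate|].
    apply Hnew in Hl as [Hl|[Hl|Hl]]; try discriminate.
    + eapply fr_LUR; eauto. apply incl_refl.
    + inversion Hl; subst. destruct (iG1 _ _ _ _ _ _ I _ _ _ Hx) as [_ X]; simpl in X; fold s in X; lia.
  - intros p k l res Hl. apply Hnew in Hl as [Hl|[Hl|Hl]]; try discriminate. eapply fr_LR; eauto. apply incl_refl.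
Qed.

Lemma entok_mono n A A' R R' p s s' e : entok n A R p s e -> incl A A' -> incl R R' ->
  lt s <= lt s' -> rid s = rid s' -> entok n A' R' p s' e.
Proof.
  intros H HA HR Hl Hr. destruct e; simpl in *; rewrite <- Hr.
  - destruct H as [? [r [lr ?]]]; eauto 6.
  - destruct H as [? [r [tv [la [? ?]]]]]. split; auto. exists r, tv, la; split; [lia|auto].
Qed.

Lemma inv_frame n c c' tr g A R A' R' : Inv n c tr g A R -> mono (loc c) (loc c') -> incl A A' -> incl R R' ->
  (forall p, busy (loc c' p) = false -> g p (rid (loc c' p)) = None /\ resps (loc c' p) = []) ->
  (forall p i, g p (rid (loc c' p)) = Some i -> busy (loc c' p) = true /\ pk i = opcnt (loc c' p) - 1 /\
        (forall k l r, i = PQ k l r -> rreg (loc c' p) = r)) ->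
  (forall p e, In e (resps (loc c' p)) -> entok n A' R' p (loc c' p) e) ->
  (forall p, NoDup (map sender (resps (loc c' p)))) ->
  (forall q p rd, length (filter (tok q p rd) (net c')) +
        (if rid (loc c' p) =? rd then length (filter (isER q) (resps (loc c' p))) else 0) <= 1) ->
  (forall a, In a A' -> a_l a <= lt (loc c' (a_q a)) /\ ts_le (fst (a_tv a)) (fst (tvps (loc c' (a_q a)) (a_r a))) /\
        exists k, g (a_p a) (a_rd a) = Some (PU k (a_r a) (a_tv a))) ->
  (forall s, In s R' -> r_l s <= lt (loc c' (r_q s)) /\ exists k l, g (r_p s) (r_rd s) = Some (PQ k l (r_r s)) /\ l < r_l s) ->
  (forall a s, In a A' -> In s R' -> a_q a = r_q s -> a_r a = r_r s -> a_l a < r_l s -> ts_le (fst (a_tv a)) (fst (r_tv s))) ->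
  (forall m, In m (net c') -> netok n g A' R' m) ->
  Inv n c' tr g A' R'.
Proof.
  intros I M HA HR H2 H3 H4 H5 H6 H7 H8 H9 H10.
  assert (Gx : gext g g) by (intros ? ? ? ?; auto).
  constructor; auto.
  - intros p rd x Hx. destruct (iG1 _ _ _ _ _ _ I _ _ _ Hx). destruct (M p) as [_ [? [? _]]]. lia.
  - intros lab Hl. eapply fr_LK; eauto.
  - apply (iLInvU _ _ _ _ _ _ I).
  - apply (iGL1 _ _ _ _ _ _ I).
  - apply (iGL2 _ _ _ _ _ _ I).
  - apply (iGU _ _ _ _ _ _ I).
  - apply (iGQU _ _ _ _ _ _ I).
  - apply (iGQB _ _ _ _ _ _ I).
  - apply (iLQ _ _ _ _ _ _ I).
  - apply (iLU _ _ _ _ _ _ I).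
  - intros; eapply fr_LUR; eauto.
  - intros; eapply fr_LR; eauto.
Qed.

Lemma in_net_mid (m x : msg) pre post : In x (pre ++ post) -> In x (pre ++ m :: post).
Proof. intros H; apply in_app_or in H as [H|H]; apply in_or_app; simpl; auto. Qed.

Lemma inv_dq n c tr g A R pre m post s' ms ls rd r :
 Inv n c tr g A R -> net c = pre ++ m :: post -> pl m = Query rd r ->
 deliver n (dst m) (loc c (dst m)) m = (s', ms, ls) ->
 Inv n (mkC (updf (loc c) (dst m) s') (pre ++ post ++ ms)) (tr ++ ls) g A
   (MkR (dst m) (src m) rd r (Nat.max (lt (loc c (dst m))) (mlt m) + 1) (tvps (loc c (dst m)) r) :: R).
Proof.
  intros I Hn Hpl H. unfold deliver in H. rewrite Hpl in H. inversion H; subst; clear H.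
  rewrite app_nil_r.
  assert (Nm : netok n g A R m) by (apply (iNET _ _ _ _ _ _ I); rewrite Hn; apply in_or_app; simpl; auto).
  unfold netok in Nm; rewrite Hpl in Nm. destruct Nm as [Hsrc [Hdst [k0 Gm]]].
  set (q := dst m) in *. set (s := loc c q) in *.
  set (l := Nat.max (lt s) (mlt m) + 1).
  set (s' := {| lt := l; rid := rid s; tvps := tvps s; resps := resps s; reading := reading s;
       rreg := rreg s; rval := rval s; busy := busy s; opcnt := opcnt s; crashed := crashed s |}).
  set (nr := MkR q (src m) rd r l (tvps s r)).
  set (c' := {| loc := updf (loc c) q s'; net := pre ++ post ++ [mkM q (src m) l (Response rd (tvps s r))] |}).
  assert (M : mono (loc c) (loc c')) by (apply mono_updf; unfold s', l, s; simpl; try lia; intros; apply ts_le_refl).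
  assert (HR : incl R (nr :: R)) by (intros x Hx; simpl; auto).
  change (Inv n c' tr g A (nr :: R)).
  apply (inv_frame _ _ _ _ _ _ _ _ _ I M (incl_refl A) HR).
  - intros p. unfold c'; simpl. caseproc p q; apply (iG2 _ _ _ _ _ _ I).
  - intros p. unfold c'; simpl. caseproc p q; apply (iG3 _ _ _ _ _ _ I).
  - intros p e. unfold c'; simpl. caseproc p q; intros He;
      (eapply entok_mono; [apply (iG4 _ _ _ _ _ _ I _ _ He)|apply incl_refl|exact HR| |]); simpl; try reflexivity.
    unfold l; fold s; lia.
  - intros p. unfold c'; simpl. caseproc p q; apply (iG5 _ _ _ _ _ _ I).
  - intros q' p rd'. pose proof (iCNT _ _ _ _ _ _ I q' p rd') as C. rewrite Hn in C.
    assert (E : forall p0, rid (loc c' p0) = rid (loc c p0) /\ resps (loc c' p0) = resps (loc c p0)).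
    { intros p0; unfold c'; simpl; caseproc p0 q; auto. }
    destruct (E p) as [-> ->]. unfold c'; simpl. rewrite !filter_app_len in *. simpl in *.
    replace (tok q' p rd' {| src := q; dst := src m; mlt := l; pl := Response rd (tvps s r) |})
      with (tok q' p rd' m); [destruct (tok q' p rd' m); simpl in *; lia|].
    unfold tok; simpl; rewrite Hpl. fold q. 
    destruct (src m =? p), (q =? q'), (rd =? rd'); reflexivity.
  - intros a Ha. eapply fr_RA; eauto. intros ? ? ? ?; auto.
  - intros x [<-|Hx].
    + unfold c'; simpl. rewrite updf_eq. simpl. split; [lia|]. exists k0, (mlt m). split; auto. unfold l; lia.
    + eapply fr_RR; eauto. intros ? ? ? ?; auto.
  - intros a x Ha [<-|Hx] E1 E2 E3.
    + simpl in *. destruct (iRA _ _ _ _ _ _ I a Ha) as [_ [X _]]. rewrite E1, E2 in X. exact X.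
    + eapply (iRAR _ _ _ _ _ _ I); eauto.
  - intros x Hx. unfold c' in Hx; simpl in Hx. rewrite app_assoc in Hx. apply in_app_or in Hx as [Hx|[<-|[]]].
    + apply (fr_netok n g g A A R (nr :: R)); [intros ? ? ? ?; auto| apply incl_refl| exact HR|].
      apply (iNET _ _ _ _ _ _ I). rewrite Hn. apply in_net_mid; auto.
    + unfold netok; simpl. split; [lia|]. exists r. left; reflexivity.
Qed.

Lemma inv_du n c tr g A R pre m post s' ms ls rd r tv :
 Inv n c tr g A R -> net c = pre ++ m :: post -> pl m = Update rd r tv ->
 deliver n (dst m) (loc c (dst m)) m = (s', ms, ls) ->
 Inv n (mkC (updf (loc c) (dst m) s') (pre ++ post ++ ms)) (tr ++ ls) g
   (MkA (dst m) (src m) rd r tv (Nat.max (lt (loc c (dst m))) (mlt m) + 1) :: A) R.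
Proof.
  intros I Hn Hpl H. unfold deliver in H. rewrite Hpl in H. inversion H; subst; clear H.
  rewrite app_nil_r.
  assert (Nm : netok n g A R m) by (apply (iNET _ _ _ _ _ _ I); rewrite Hn; apply in_or_app; simpl; auto).
  unfold netok in Nm; rewrite Hpl in Nm. destruct Nm as [Hdst [k0 Gm]].
  set (q := dst m) in *. set (s := loc c q) in *.
  set (l := Nat.max (lt s) (mlt m) + 1).
  set (tv' := fun r' => if r' =? r then tsv_max (tvps s r) tv else tvps s r').
  set (s' := {| lt := l; rid := rid s; tvps := tv'; resps := resps s; reading := reading s;
       rreg := rreg s; rval := rval s; busy := busy s; opcnt := opcnt s; crashed := crashed s |}).
  set (na := MkA q (src m) rd r tv l).
  set (c' := {| loc := updf (loc c) q s'; net := pre ++ post ++ [mkM q (src m) l (Ack rd)] |}).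
  assert (M : mono (loc c) (loc c')).
  { apply mono_updf; unfold s', l, s; simpl; try lia. intros r'. unfold tv'.
    destruct (r' =? r) eqn:E; [apply Nat.eqb_eq in E; subst; apply tsv_max_l|apply ts_le_refl]. }
  assert (HA : incl A (na :: A)) by (intros x Hx; simpl; auto).
  change (Inv n c' tr g (na :: A) R).
  apply (inv_frame _ _ _ _ _ _ _ _ _ I M HA (incl_refl R)).
  - intros p. unfold c'; simpl. caseproc p q; apply (iG2 _ _ _ _ _ _ I).
  - intros p. unfold c'; simpl. caseproc p q; apply (iG3 _ _ _ _ _ _ I).
  - intros p e. unfold c'; simpl. caseproc p q; intros He;
      (eapply entok_mono; [apply (iG4 _ _ _ _ _ _ I _ _ He)|exact HA|apply incl_refl| |]); simpl; try reflexivity.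
    unfold l; fold s; lia.
  - intros p. unfold c'; simpl. caseproc p q; apply (iG5 _ _ _ _ _ _ I).
  - intros q' p rd'. pose proof (iCNT _ _ _ _ _ _ I q' p rd') as C. rewrite Hn in C.
    assert (E : forall p0, rid (loc c' p0) = rid (loc c p0) /\ resps (loc c' p0) = resps (loc c p0)).
    { intros p0; unfold c'; simpl; caseproc p0 q; auto. }
    destruct (E p) as [-> ->]. unfold c'; simpl. rewrite !filter_app_len in *. simpl in *.
    assert (T : tok q' p rd' m = false) by (unfold tok; rewrite Hpl; reflexivity).
    rewrite T in C. unfold tok; simpl. fold (tok q' p rd'). simpl in C. lia.
  - intros a [<-|Ha].
    + unfold c'; simpl. rewrite updf_eq. simpl. split; [lia|]. split; [|eauto].
      unfold tv'; rewrite Nat.eqb_refl. apply tsv_max_r.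
    + eapply fr_RA; eauto. intros ? ? ? ?; auto.
  - intros x Hx. eapply fr_RR; eauto. intros ? ? ? ?; auto.
  - intros a x [<-|Ha] Hx E1 E2 E3.
    + simpl in *. destruct (iRR _ _ _ _ _ _ I x Hx) as [X _]. rewrite <- E1 in X. fold s in X. unfold l in E3. lia.
    + eapply (iRAR _ _ _ _ _ _ I); eauto.
  - intros x Hx. unfold c' in Hx; simpl in Hx. rewrite app_assoc in Hx. apply in_app_or in Hx as [Hx|[<-|[]]].
    + apply (fr_netok n g g A (na :: A) R R); [intros ? ? ? ?; auto| exact HA| apply incl_refl|].
      apply (iNET _ _ _ _ _ _ I). rewrite Hn. apply in_net_mid; auto.
    + unfold netok; simpl. split; [lia|]. exists r, tv. left; reflexivity.
Qed.

Lemma set_add_cases e l : set_add e l = l \/ set_add e l = e :: l.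
Proof. unfold set_add; destruct (existsb (entry_eqb e) l); auto. Qed.

Lemma in_map_sender q l : In q (map sender l) -> exists e, In e l /\ sender e = q.
Proof. intros H; apply in_map_iff in H as [e [E H]]; eauto. Qed.

Lemma filter_len_pos {X} (f : X -> bool) l x : In x l -> f x = true -> 1 <= length (filter f l).
Proof.
  induction l as [|a l IH]; simpl; [tauto|]. intros [->|H] Hf.
  - rewrite Hf; simpl; lia.
  - destruct (f a); simpl; [lia|auto].
Qed.

Record RespPrep n c (g : ghost) (A : list arec) (R : list rrec) (p q rd : nat) (tv : tsv) (rs : list entry) (pre post : list msg) : Prop := {
  rp_k : nat; rp_l : nat; rp_r : nat;
  rp_g : g p rd = Some (PQ rp_k rp_l rp_r);
  rp_rreg : rreg (loc c p) = rp_r;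
  rp_busy : busy (loc c p) = true;
  rp_kk : rp_k = opcnt (loc c p) - 1;
  rp_op : 1 <= opcnt (loc c p);
  rp_ent : forall e, In e rs -> entok n A R p (loc c p) e /\ exists tv', e = EResp tv' (sender e);
  rp_nd : NoDup (map sender rs);
  rp_cnt : forall q', length (filter (tok q' p rd) (pre ++ post)) + length (filter (isER q') rs) <= 1
}.

Lemma resp_prep n c tr g A R pre m post rd tv :
  Inv n c tr g A R -> net c = pre ++ m :: post -> pl m = Response rd tv -> rid (loc c (dst m)) = rd ->
  RespPrep n c g A R (dst m) (src m) rd tv (set_add (EResp tv (src m)) (resps (loc c (dst m)))) pre post.
Proof.
  intros I Hn Hpl Hrid.
  assert (Nm : netok n g A R m) by (apply (iNET _ _ _ _ _ _ I); rewrite Hn; apply in_or_app; simpl; auto).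
  unfold netok in Nm; rewrite Hpl in Nm. destruct Nm as [Hsrc [r0 Hr]].
  set (p := dst m) in *. set (q := src m) in *. set (s := loc c p) in *.
  destruct (iRR _ _ _ _ _ _ I _ Hr) as [_ [k0 [l0 [G0 _]]]]; simpl in G0.
  assert (G3 := iG3 _ _ _ _ _ _ I p (PQ k0 l0 r0)). fold s in G3. rewrite Hrid in G3.
  destruct (G3 G0) as [Hb [Hk Hrr]]. specialize (Hrr _ _ _ eq_refl).
  destruct (iG1 _ _ _ _ _ _ I _ _ _ G0) as [_ Hop]. simpl in Hop.
  assert (Tm : tok q p rd m = true) by (unfold tok; rewrite Hpl; fold p q; rewrite !Nat.eqb_refl; reflexivity).
  assert (Cq := iCNT _ _ _ _ _ _ I q p rd). fold s in Cq. rewrite Hn, Hrid, Nat.eqb_refl in Cq.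
  rewrite !filter_app_len in Cq; simpl in Cq. rewrite Tm in Cq; simpl in Cq.
  assert (Eold : forall e, In e (resps s) -> entok n A R p s e /\ exists tv', e = EResp tv' (sender e)).
  { intros e He. pose proof (iG4 _ _ _ _ _ _ I p e He) as X. fold s in X. split; auto.
    destruct e as [tv' j|j]; [eauto|]. exfalso. simpl in X. destruct X as [_ [r' [tv' [la [_ Ha]]]]].
    destruct (iRA _ _ _ _ _ _ I _ Ha) as [_ [_ [k' Ga]]]. simpl in Ga. rewrite Hrid, G0 in Ga. discriminate. }
  assert (Nq : ~ In q (map sender (resps s))).
  { intros Hq. apply in_map_sender in Hq as [e [He Es]]. destruct (Eold e He) as [_ [tv' Ee]].
    rewrite Es in Ee; subst e. assert (1 <= length (filter (isER q) (resps s))).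
    { eapply filter_len_pos; eauto. simpl; apply Nat.eqb_refl. } lia. }
  econstructor; eauto.
  - unfold s in *; lia.
  - intros e He. destruct (set_add_cases (EResp tv q) (resps s)) as [E|E]; rewrite E in He.
    + auto.
    + destruct He as [<-|He]; auto. simpl. split; [split; [lia|]|eauto]. change (loc c p) with s; rewrite Hrid. eauto.
  - destruct (set_add_cases (EResp tv q) (resps s)) as [E|E]; rewrite E.
    + apply (iG5 _ _ _ _ _ _ I).
    + simpl. constructor; auto. apply (iG5 _ _ _ _ _ _ I).
  - intros q'. assert (Cq' := iCNT _ _ _ _ _ _ I q' p rd). fold s in Cq'. rewrite Hn, Hrid, Nat.eqb_refl in Cq'.
    rewrite !filter_app_len in Cq' |- *; simpl in Cq'.
    destruct (set_add_cases (EResp tv q) (resps s)) as [E|E]; rewrite E.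
    + destruct (tok q' p rd m); simpl in Cq'; lia.
    + simpl. destruct (q =? q') eqn:Eq.
      * apply Nat.eqb_eq in Eq; subst q'. simpl. rewrite Tm in Cq'. simpl in Cq'.
        assert (length (filter (isER q) (resps s)) = 0).
        { destruct (filter (isER q) (resps s)) eqn:F; auto. exfalso.
          assert (In e (filter (isER q) (resps s))) by (rewrite F; simpl; auto).
          apply filter_In in H as [He Hf]. destruct e as [tv'' j|j]; [|discriminate].
          simpl in Hf. apply Nat.eqb_eq in Hf. subst j. apply Nq. apply in_map_iff. exists (EResp tv'' q). simpl. auto. }
        lia.
      * destruct (tok q' p rd m); simpl in Cq'; lia.
Qed.

Lemma inv_dr_nq n c tr g A R pre m post s' ms ls rd tv :
 Inv n c tr g A R -> net c = pre ++ m :: post -> pl m = Response rd tv -> rid (loc c (dst m)) = rd ->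
 (length (set_add (EResp tv (src m)) (resps (loc c (dst m)))) =? maj n) = false ->
 deliver n (dst m) (loc c (dst m)) m = (s', ms, ls) ->
 Inv n (mkC (updf (loc c) (dst m) s') (pre ++ post ++ ms)) (tr ++ ls) g A R.
Proof.
  intros I Hn Hpl Hrid Hq H.
  destruct (resp_prep _ _ _ _ _ _ _ _ _ _ _ I Hn Hpl Hrid) as [k0 l0 r0 G0 Hrr Hb Hk Hop Hent Hnd Hcnt].
  unfold deliver in H. rewrite Hpl, Hrid, Nat.eqb_refl, Hq in H. inversion H; subst; clear H.
  rewrite !app_nil_r.
  set (p := dst m) in *. set (q := src m) in *. set (s := loc c p) in *.
  set (rs := set_add (EResp tv q) (resps s)) in *.
  set (l := Nat.max (lt s) (mlt m) + 1).
  set (s' := {| lt := l; rid := rid s; tvps := tvps s; resps := rs; reading := reading s;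
       rreg := rreg s; rval := rval s; busy := busy s; opcnt := opcnt s; crashed := crashed s |}).
  set (c' := {| loc := updf (loc c) p s'; net := pre ++ post |}).
  assert (M : mono (loc c) (loc c')) by (apply mono_updf; unfold s', l, s; simpl; try lia; intros; apply ts_le_refl).
  assert (Gx : gext g g) by (intros ? ? ? ?; auto).
  change (Inv n c' tr g A R).
  apply (inv_frame _ _ _ _ _ _ _ _ _ I M (incl_refl A) (incl_refl R)).
  - intros p'. unfold c'; simpl. caseproc p' p; [fold s; rewrite Hb; discriminate|apply (iG2 _ _ _ _ _ _ I)].
  - intros p'. unfold c'; simpl. caseproc p' p; apply (iG3 _ _ _ _ _ _ I).
  - intros p' e. unfold c'; simpl. caseproc p' p.
    + intros He. destruct (Hent e He) as [X _]. eapply entok_mono; [exact X|apply incl_refl|apply incl_refl| |];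
      simpl; [unfold l; fold s; lia|reflexivity].
    + apply (iG4 _ _ _ _ _ _ I).
  - intros p'. unfold c'; simpl. caseproc p' p; [exact Hnd|apply (iG5 _ _ _ _ _ _ I)].
  - intros q' p' rd'. pose proof (iCNT _ _ _ _ _ _ I q' p' rd') as C. rewrite Hn in C.
    unfold c'; simpl. rewrite !filter_app_len in C |- *. simpl in C. caseproc p' p.
    + fold s in C |- *. destruct (rid s =? rd') eqn:E.
      * apply Nat.eqb_eq in E; subst rd'. specialize (Hcnt q'). rewrite filter_app_len in Hcnt. lia.
      * destruct (tok q' p rd' m); simpl in C; lia.
    + destruct (tok q' p' rd' m); simpl in C; lia.
  - intros a Ha. eapply fr_RA; eauto.
  - intros x Hx. eapply fr_RR; eauto.
  - apply (iRAR _ _ _ _ _ _ I).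
  - intros x Hx. apply (iNET _ _ _ _ _ _ I). rewrite Hn. apply in_net_mid; auto.
Qed.

Lemma in_resp_tsvs tv j l : In (EResp tv j) l -> In tv (resp_tsvs l).
Proof.
  induction l as [|a l IH]; simpl; [tauto|]. intros [->|H].
  - simpl; auto.
  - apply in_or_app; right; auto.
Qed.

Lemma inv_dr_q n c tr g A R pre m post s' ms ls rd tv :
 Inv n c tr g A R -> net c = pre ++ m :: post -> pl m = Response rd tv -> rid (loc c (dst m)) = rd ->
 (length (set_add (EResp tv (src m)) (resps (loc c (dst m)))) =? maj n) = true ->
 deliver n (dst m) (loc c (dst m)) m = (s', ms, ls) ->
 Inv n (mkC (updf (loc c) (dst m) s') (pre ++ post ++ ms)) (tr ++ ls)
   (gset g (dst m) (rid (loc c (dst m)) + 1) (PU (opcnt (loc c (dst m)) - 1) (rreg (loc c (dst m)))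
      (list_max_tsv (resp_tsvs (set_add (EResp tv (src m)) (resps (loc c (dst m)))))))) A R.
Proof.
  intros I Hn Hpl Hrid Hq H.
  destruct (resp_prep _ _ _ _ _ _ _ _ _ _ _ I Hn Hpl Hrid) as [k0 l0 r0 G0 Hrr Hb Hk Hop Hent Hnd Hcnt].
  unfold deliver in H. rewrite Hpl, Hrid, Nat.eqb_refl, Hq in H. inversion H; subst; clear H.
  apply Nat.eqb_eq in Hq.
  set (p := dst m) in *. set (q := src m) in *. set (s := loc c p) in *.
  set (rs := set_add (EResp tv q) (resps s)) in *.
  set (tm := list_max_tsv (resp_tsvs rs)) in *.
  set (l := Nat.max (lt s) (mlt m) + 1).
  set (k := opcnt s - 1) in *.
  set (g' := gset g p (rid s + 1) (PU k (rreg s) tm)).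
  assert (G1 : g p (rid s + 1) = None) by (apply (g_none _ _ _ _ _ _ _ _ I); unfold s; lia).
  assert (Gx : gext g g') by (intros p' rd x Hx; apply gset_old; auto).
  set (s' := {| lt := l; rid := rid s + 1; tvps := tvps s; resps := []; reading := reading s;
       rreg := rreg s; rval := snd tm; busy := busy s; opcnt := opcnt s; crashed := crashed s |}).
  set (c' := {| loc := updf (loc c) p s'; net := pre ++ post ++ bcast n p l (Update (rid s + 1) (rreg s) tm) |}).
  set (tr' := tr ++ [LUpd p k tm]).
  assert (M : mono (loc c) (loc c')) by (apply mono_updf; unfold s', l, s; simpl; try lia; intros; apply ts_le_refl).
  assert (Tx : incl tr tr') by (intros x Hx; apply in_or_app; auto).
  assert (Hnew : forall lab, In lab tr' -> In lab tr \/ lab = LUpd p k tm).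
  { intros lab Hl. apply in_app_or in Hl as [Hl|[Hl|[]]]; auto. }
  assert (Hsub : forall x, In x (pre ++ post) -> In x (net c)) by (intros x Hx; rewrite Hn; apply in_net_mid; auto).
  pose proof (fr_RA n c c' tr g g' A R I M Gx) as FRA.
  pose proof (fr_RR n c c' tr g g' A R I M Gx) as FRR.
  assert (HG : forall rd x, g p rd = Some x -> rd <= rid s) by (intros rd x Hx; apply (iG1 _ _ _ _ _ _ I _ _ _ Hx)).
  change (Inv n c' tr' g' A R).
  constructor.
  - intros p' rd x Hx. apply gset_inv in Hx as [[-> [-> ->]]|Hx].
    + unfold c'; simpl; rewrite updf_eq; simpl. unfold k; lia.
    + destruct (iG1 _ _ _ _ _ _ I _ _ _ Hx). destruct (M p') as [_ [? [? _]]]. lia.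
  - intros p'. unfold c'; simpl. caseproc p' p; [fold s; rewrite Hb; discriminate|].
    intros Hb'. destruct (iG2 _ _ _ _ _ _ I p' Hb'). unfold g'; rewrite gset_other; auto.
  - intros p' x. unfold c'; simpl. caseproc p' p.
    + unfold g'; rewrite gset_new. intros Hx; inversion Hx; subst. simpl. repeat split; auto.
      intros k1 l1 r1 E; inversion E.
    + unfold g'; rewrite gset_other by auto. apply (iG3 _ _ _ _ _ _ I).
  - intros p' e. unfold c'; simpl. caseproc p' p; [tauto|].
    intros He. eapply entok_mono; [apply (iG4 _ _ _ _ _ _ I _ _ He)|apply incl_refl|apply incl_refl|lia|reflexivity].
  - intros p'. unfold c'; simpl. caseproc p' p; [constructor|apply (iG5 _ _ _ _ _ _ I)].
  - intros q' p' rd'. pose proof (iCNT _ _ _ _ _ _ I q' p' rd') as C. rewrite Hn in C.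
    unfold c'; simpl. rewrite !filter_app_len, bcast_tok_update in *. simpl in C |- *. caseproc p' p.
    + fold s in C |- *. destruct (rid s + 1 =? rd') eqn:E.
      * apply Nat.eqb_eq in E; subst rd'.
        assert (F := fresh_tok _ _ _ _ _ _ q' p (rid s + 1) I ltac:(unfold s; lia)).
        rewrite Hn, !filter_app in F. simpl in *. 
        destruct (filter (tok q' p (rid s + 1)) pre), (filter (tok q' p (rid s + 1)) post); simpl in *; try lia;
        destruct (tok q' p (rid s + 1) m); simpl in F; discriminate.
      * destruct (rid s =? rd'); destruct (tok q' p rd' m); simpl in C; lia.
    + destruct (tok q' p' rd' m); simpl in C; lia.
  - apply FRA.
  - apply FRR.
  - apply (iRAR _ _ _ _ _ _ I).
  - intros x Hx. unfold c' in Hx; simpl in Hx. rewrite app_assoc in Hx. apply in_app_or in Hx as [Hx|Hx].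
    + apply (fr_netok n g g' A A R R); [exact Gx| apply incl_refl| apply incl_refl|].
      apply (iNET _ _ _ _ _ _ I). apply Hsub; auto.
    + apply in_bcast in Hx as [E1 [E2 [E3 E4]]]. unfold netok. rewrite E4, E1.
      split; [lia|]. exists k. unfold g'; apply gset_new.
  - intros lab Hl. apply Hnew in Hl as [Hl| -> ].
    + eapply fr_LK; eauto.
    + unfold c'; simpl. rewrite updf_eq; simpl. unfold k; lia.
  - intros p' k1 l1 o l' o' H1 H2.
    apply Hnew in H1 as [H1|H1]; [|discriminate]. apply Hnew in H2 as [H2|H2]; [|discriminate].
    eapply (iLInvU _ _ _ _ _ _ I); eauto.
  - intros p' rd k1 l1 r1 Hx. apply gset_inv in Hx as [[-> [-> Hx]]|Hx]; [discriminate|].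
    eapply fr_GL1; eauto.
  - intros p' rd k1 r1 tv1 Hx. apply gset_inv in Hx as [[-> [-> Hx]]|Hx].
    + inversion Hx; subst. exists l0, (ORead (rreg s)). split; auto.
      apply Tx. eapply (iGL1 _ _ _ _ _ _ I); eauto.
    + eapply fr_GL2; eauto.
  - intros p' rd rd' k1 r1 r' tv1 tv' H1 H2.
    apply gset_inv in H1 as [[-> [-> H1]]|H1]; apply gset_inv in H2 as [[E1 [-> H2]]|H2].
    + auto.
    + inversion H1; subst. pose proof (iGQB _ _ _ _ _ _ I _ _ _ _ _ _ _ _ G0 H2). pose proof (HG _ _ H2). lia.
    + inversion H2; subst. pose proof (iGQB _ _ _ _ _ _ I _ _ _ _ _ _ _ _ G0 H1). pose proof (HG _ _ H1). lia.
    + eapply (iGU _ _ _ _ _ _ I); eauto.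
  - intros p' rd rd' k1 l1 r1 l' r' H1 H2.
    apply gset_inv in H1 as [[_ [_ H1]]|H1]; [discriminate|].
    apply gset_inv in H2 as [[_ [_ H2]]|H2]; [discriminate|].
    eapply (iGQU _ _ _ _ _ _ I); eauto.
  - intros p' rd rd' k1 l1 r1 r' tv1 H1 H2.
    apply gset_inv in H1 as [[_ [_ H1]]|H1]; [discriminate|].
    apply gset_inv in H2 as [[-> [-> H2]]|H2].
    + pose proof (HG _ _ H1). lia.
    + eapply (iGQB _ _ _ _ _ _ I); eauto.
  - intros p' k1 Hl. apply Hnew in Hl as [Hl|Hl]; [|discriminate]. eapply fr_LQ; eauto.
  - intros p' k1 tv1 Hl. apply Hnew in Hl as [Hl|Hl]; [eapply fr_LU; eauto|].
    inversion Hl; subst. exists (rid s + 1), (rreg s). apply gset_new.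
  - intros p' k1 tv1 rd l1 r1 Hl Hx.
    apply gset_inv in Hx as [[-> [-> Hx]]|Hx]; [discriminate|].
    apply Hnew in Hl as [Hl|Hl].
    + eapply fr_LUR; eauto. apply incl_refl.
    + inversion Hl; subst p' k1 tv1.
      pose proof (iGQU _ _ _ _ _ _ I _ _ _ _ _ _ _ _ Hx G0) as ->. rewrite G0 in Hx. inversion Hx; subst l1 r1.
      exists (map sender rs). split; [split; [exact Hnd|split]|].
      * rewrite length_map; exact Hq.
      * intros q' Hq'. apply in_map_sender in Hq' as [e [He Es]]. destruct (Hent e He) as [X _].
        destruct e; simpl in *; subst; tauto.
      * intros q' Hq'. apply in_map_sender in Hq' as [e [He Es]]. destruct (Hent e He) as [X [tv' Ee]].
        rewrite Ee in X, He. simpl in X. rewrite Es in *. destruct X as [_ [r' [lr HR]]].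
        destruct (iRR _ _ _ _ _ _ I _ HR) as [_ [k2 [l2 [G2 L2]]]]. simpl in G2, L2.
        fold s in G2. rewrite G0 in G2. inversion G2; subst k2 l2 r'.
        exists lr, tv'. split; [auto|split; [exact HR|]].
        apply list_max_ge. eapply in_resp_tsvs; eauto.
  - intros p' k1 l1 res Hl. apply Hnew in Hl as [Hl|Hl]; [|discriminate]. eapply fr_LR; eauto. apply incl_refl.
Qed.

Record AckPrep n c (g : ghost) (A : list arec) (R : list rrec) (p q rd : nat) (rs : list entry) : Prop := {
  ap_k : nat; ap_r : nat; ap_tv : tsv;
  ap_g : g p rd = Some (PU ap_k ap_r ap_tv);
  ap_busy : busy (loc c p) = true;
  ap_kk : ap_k = opcnt (loc c p) - 1;
  ap_op : 1 <= opcnt (loc c p);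
  ap_ent : forall e, In e rs -> entok n A R p (loc c p) e \/ e = EAck q;
  ap_ack : forall e, In e rs -> e = EAck (sender e);
  ap_nd : NoDup (map sender rs);
  ap_er : forall q', filter (isER q') rs = []
}.

Lemma ack_prep n c tr g A R pre m post rd :
  Inv n c tr g A R -> net c = pre ++ m :: post -> pl m = Ack rd -> rid (loc c (dst m)) = rd ->
  AckPrep n c g A R (dst m) (src m) rd (set_add (EAck (src m)) (resps (loc c (dst m)))).
Proof.
  intros I Hn Hpl Hrid.
  assert (Nm : netok n g A R m) by (apply (iNET _ _ _ _ _ _ I); rewrite Hn; apply in_or_app; simpl; auto).
  unfold netok in Nm; rewrite Hpl in Nm. destruct Nm as [Hsrc [r0 [tv0 Ha]]].
  set (p := dst m) in *. set (q := src m) in *. set (s := loc c p) in *.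
  destruct (iRA _ _ _ _ _ _ I _ Ha) as [_ [_ [k0 G0]]]; simpl in G0.
  assert (G3 := iG3 _ _ _ _ _ _ I p (PU k0 r0 tv0)). fold s in G3. rewrite Hrid in G3.
  destruct (G3 G0) as [Hb [Hk _]].
  destruct (iG1 _ _ _ _ _ _ I _ _ _ G0) as [_ Hop]. simpl in Hop.
  assert (Eold : forall e, In e (resps s) -> entok n A R p s e /\ e = EAck (sender e)).
  { intros e He. pose proof (iG4 _ _ _ _ _ _ I p e He) as X. fold s in X. split; auto.
    destruct e as [tv' j|j]; [|reflexivity]. exfalso. simpl in X. destruct X as [_ [r' [lr Hr]]].
    destruct (iRR _ _ _ _ _ _ I _ Hr) as [_ [k' [l' [Gr _]]]]. simpl in Gr. fold s in Gr. rewrite Hrid, G0 in Gr. discriminate. }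
  econstructor; eauto.
  - unfold s in *; lia.
  - intros e He. destruct (set_add_cases (EAck q) (resps s)) as [E|E]; rewrite E in He.
    + left; apply Eold; auto.
    + destruct He as [<-|He]; auto. left; apply Eold; auto.
  - intros e He. destruct (set_add_cases (EAck q) (resps s)) as [E|E]; rewrite E in He.
    + apply Eold; auto.
    + destruct He as [<-|He]; auto. apply Eold; auto.
  - unfold set_add. destruct (existsb (entry_eqb (EAck q)) (resps s)) eqn:Ex.
    + apply (iG5 _ _ _ _ _ _ I).
    + simpl. constructor; [|apply (iG5 _ _ _ _ _ _ I)].
      intros Hq. apply in_map_sender in Hq as [e [He Es]]. destruct (Eold e He) as [_ Ee].
      rewrite Es in Ee; subst e.
      assert (existsb (entry_eqb (EAck q)) (resps s) = true); [|congruence].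
      apply existsb_exists. exists (EAck q); split; auto. simpl; apply Nat.eqb_refl.
  - intros q'. apply filter_nil'. intros e He.
    destruct (set_add_cases (EAck q) (resps s)) as [E|E]; rewrite E in He.
    + destruct (Eold e He) as [_ Ee]. rewrite Ee; reflexivity.
    + destruct He as [<-|He]; [reflexivity|]. destruct (Eold e He) as [_ Ee]. rewrite Ee; reflexivity.
Qed.

Lemma inv_da_nq n c tr g A R pre m post s' ms ls rd :
 Inv n c tr g A R -> net c = pre ++ m :: post -> pl m = Ack rd -> rid (loc c (dst m)) = rd ->
 (length (set_add (EAck (src m)) (resps (loc c (dst m)))) =? maj n) = false ->
 deliver n (dst m) (loc c (dst m)) m = (s', ms, ls) ->
 Inv n (mkC (updf (loc c) (dst m) s') (pre ++ post ++ ms)) (tr ++ ls) g A R.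
Proof.
  intros I Hn Hpl Hrid Hq H.
  destruct (ack_prep _ _ _ _ _ _ _ _ _ _ I Hn Hpl Hrid) as [k0 r0 tv0 G0 Hb Hk Hop Hent Hack Hnd Her].
  assert (Nm : netok n g A R m) by (apply (iNET _ _ _ _ _ _ I); rewrite Hn; apply in_or_app; simpl; auto).
  unfold netok in Nm; rewrite Hpl in Nm. destruct Nm as [Hsrc [r1 [tv1 Ha]]].
  unfold deliver in H. rewrite Hpl, Hrid, Nat.eqb_refl, Hq in H. inversion H; subst; clear H.
  rewrite !app_nil_r.
  set (p := dst m) in *. set (q := src m) in *. set (s := loc c p) in *.
  set (rs := set_add (EAck q) (resps s)) in *.
  set (l := Nat.max (lt s) (mlt m) + 1).
  set (s' := {| lt := l; rid := rid s; tvps := tvps s; resps := rs; reading := reading s;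
       rreg := rreg s; rval := rval s; busy := busy s; opcnt := opcnt s; crashed := crashed s |}).
  set (c' := {| loc := updf (loc c) p s'; net := pre ++ post |}).
  assert (M : mono (loc c) (loc c')) by (apply mono_updf; unfold s', l, s; simpl; try lia; intros; apply ts_le_refl).
  change (Inv n c' tr g A R).
  apply (inv_frame _ _ _ _ _ _ _ _ _ I M (incl_refl A) (incl_refl R)).
  - intros p'. unfold c'; simpl. caseproc p' p; [fold s; rewrite Hb; discriminate|apply (iG2 _ _ _ _ _ _ I)].
  - intros p'. unfold c'; simpl. caseproc p' p; apply (iG3 _ _ _ _ _ _ I).
  - intros p' e. unfold c'; simpl. caseproc p' p.
    + intros He. destruct (Hent e He) as [X| ->].
      * eapply entok_mono; [exact X|apply incl_refl|apply incl_refl| |]; simpl; [unfold l; fold s; lia|reflexivity].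
      * simpl. split; [lia|]. exists r1, tv1, (mlt m). split; [unfold l; lia|exact Ha].
    + apply (iG4 _ _ _ _ _ _ I).
  - intros p'. unfold c'; simpl. caseproc p' p; [exact Hnd|apply (iG5 _ _ _ _ _ _ I)].
  - intros q' p' rd'. pose proof (iCNT _ _ _ _ _ _ I q' p' rd') as C. rewrite Hn in C.
    assert (T : tok q' p' rd' m = false) by (unfold tok; rewrite Hpl; reflexivity).
    unfold c'; simpl. rewrite !filter_app_len in C |- *. simpl in C. rewrite T in C. simpl in C. caseproc p' p.
    + fold s in C |- *. rewrite Her. simpl. destruct (rid s =? rd'); lia.
    + lia.
  - intros a Ha'. eapply fr_RA; eauto. intros ? ? ? ?; auto.
  - intros x Hx. eapply fr_RR; eauto. intros ? ? ? ?; auto.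
  - apply (iRAR _ _ _ _ _ _ I).
  - intros x Hx. apply (iNET _ _ _ _ _ _ I). rewrite Hn. apply in_net_mid; auto.
Qed.

Lemma inv_da_q n c tr g A R pre m post s' ms ls rd :
 Inv n c tr g A R -> net c = pre ++ m :: post -> pl m = Ack rd -> rid (loc c (dst m)) = rd ->
 (length (set_add (EAck (src m)) (resps (loc c (dst m)))) =? maj n) = true ->
 deliver n (dst m) (loc c (dst m)) m = (s', ms, ls) ->
 Inv n (mkC (updf (loc c) (dst m) s') (pre ++ post ++ ms)) (tr ++ ls) g A R.
Proof.
  intros I Hn Hpl Hrid Hq H.
  destruct (ack_prep _ _ _ _ _ _ _ _ _ _ I Hn Hpl Hrid) as [k0 r0 tv0 G0 Hb Hk Hop Hent Hack Hnd Her].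
  assert (Nm : netok n g A R m) by (apply (iNET _ _ _ _ _ _ I); rewrite Hn; apply in_or_app; simpl; auto).
  unfold netok in Nm; rewrite Hpl in Nm. destruct Nm as [Hsrc [r1 [tv1 Ha]]].
  unfold deliver in H. rewrite Hpl, Hrid, Nat.eqb_refl, Hq in H. inversion H; subst; clear H.
  apply Nat.eqb_eq in Hq. rewrite !app_nil_r.
  set (p := dst m) in *. set (q := src m) in *. set (s := loc c p) in *.
  set (rs := set_add (EAck q) (resps s)) in *.
  set (l := Nat.max (lt s) (mlt m) + 1).
  set (res := if reading s then Some (rval s) else None).
  set (s' := {| lt := l; rid := rid s + 1; tvps := tvps s; resps := []; reading := reading s;
       rreg := rreg s; rval := rval s; busy := false; opcnt := opcnt s; crashed := crashed s |}).
  set (c' := {| loc := updf (loc c) p s'; net := pre ++ post |}).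
  set (tr' := tr ++ [LResp p (opcnt s - 1) l res]).
  assert (M : mono (loc c) (loc c')) by (apply mono_updf; unfold s', l, s; simpl; try lia; intros; apply ts_le_refl).
  assert (Gx : gext g g) by (intros ? ? ? ?; auto).
  assert (Tx : incl tr tr') by (intros x Hx; apply in_or_app; auto).
  assert (Hnew : forall lab, In lab tr' -> In lab tr \/ lab = LResp p (opcnt s - 1) l res).
  { intros lab Hl. apply in_app_or in Hl as [Hl|[Hl|[]]]; auto. }
  assert (Hsub : forall x, In x (pre ++ post) -> In x (net c)) by (intros x Hx; rewrite Hn; apply in_net_mid; auto).
  assert (G1 : g p (rid s + 1) = None) by (apply (g_none _ _ _ _ _ _ _ _ I); unfold s; lia).
  change (Inv n c' tr' g A R).
  constructor.
  - intros p' rd x Hx. destruct (iG1 _ _ _ _ _ _ I _ _ _ Hx). destruct (M p') as [_ [? [? _]]]. lia.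
  - intros p'. unfold c'; simpl. caseproc p' p; [auto|apply (iG2 _ _ _ _ _ _ I)].
  - intros p' x. unfold c'; simpl. caseproc p' p; [rewrite G1; discriminate|apply (iG3 _ _ _ _ _ _ I)].
  - intros p' e. unfold c'; simpl. caseproc p' p; [tauto|].
    intros He. eapply entok_mono; [apply (iG4 _ _ _ _ _ _ I _ _ He)|apply incl_refl|apply incl_refl|lia|reflexivity].
  - intros p'. unfold c'; simpl. caseproc p' p; [constructor|apply (iG5 _ _ _ _ _ _ I)].
  - intros q' p' rd'. pose proof (iCNT _ _ _ _ _ _ I q' p' rd') as C. rewrite Hn in C.
    assert (T : tok q' p' rd' m = false) by (unfold tok; rewrite Hpl; reflexivity).
    unfold c'; simpl. rewrite !filter_app_len in C |- *. simpl in C. rewrite T in C. simpl in C. caseproc p' p.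
    + fold s in C |- *. destruct (rid s + 1 =? rd') eqn:E.
      * apply Nat.eqb_eq in E; subst rd'.
        assert (F := fresh_tok _ _ _ _ _ _ q' p (rid s + 1) I ltac:(unfold s; lia)).
        rewrite Hn, !filter_app in F. simpl in *.
        destruct (filter (tok q' p (rid s + 1)) pre), (filter (tok q' p (rid s + 1)) post); simpl in *; try lia;
        destruct (tok q' p (rid s + 1) m); simpl in F; discriminate.
      * destruct (rid s =? rd'); lia.
    + lia.
  - intros a Ha'. eapply fr_RA; eauto.
  - intros x Hx. eapply fr_RR; eauto.
  - apply (iRAR _ _ _ _ _ _ I).
  - intros x Hx. apply (iNET _ _ _ _ _ _ I). apply Hsub; auto.
  - intros lab Hl. apply Hnew in Hl as [Hl| -> ].
    + eapply fr_LK; eauto.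
    + unfold c'; simpl. rewrite updf_eq; simpl. fold s. lia.
  - intros p' k1 l1 o l' o' H1 H2.
    apply Hnew in H1 as [H1|H1]; [|discriminate]. apply Hnew in H2 as [H2|H2]; [|discriminate].
    eapply (iLInvU _ _ _ _ _ _ I); eauto.
  - intros; eapply fr_GL1; eauto.
  - intros; eapply fr_GL2; eauto.
  - apply (iGU _ _ _ _ _ _ I).
  - apply (iGQU _ _ _ _ _ _ I).
  - apply (iGQB _ _ _ _ _ _ I).
  - intros p' k1 Hl. apply Hnew in Hl as [Hl|Hl]; [|discriminate]. apply (iLQ _ _ _ _ _ _ I); auto.
  - intros p' k1 tv2 Hl. apply Hnew in Hl as [Hl|Hl]; [|discriminate]. apply (iLU _ _ _ _ _ _ I); auto.
  - intros p' k1 tv2 rd l1 r2 Hl Hx. apply Hnew in Hl as [Hl|Hl]; [|discriminate]. eapply (iLUR _ _ _ _ _ _ I); eauto.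
  - intros p' k1 l1 res1 Hl. apply Hnew in Hl as [Hl|Hl]; [exact (iLR _ _ _ _ _ _ I _ _ _ _ Hl)|].
    inversion Hl; subst p' k1 l1 res1.
    exists (rid s), r0, tv0. split; [exact G0|].
    exists (map sender rs). split; [split; [exact Hnd|split]|].
    + rewrite length_map; exact Hq.
    + intros q' Hq'. apply in_map_sender in Hq' as [e [He Es]]. destruct (Hent e He) as [X| ->].
      * destruct e; simpl in *; subst; tauto.
      * simpl in Es; subst; auto.
    + intros q' Hq'. apply in_map_sender in Hq' as [e [He Es]]. pose proof (Hack e He) as Ee.
      rewrite Es in Ee; subst e. destruct (Hent _ He) as [X|X].
      * simpl in X. destruct X as [_ [r' [tv' [la [Hla HA]]]]].
        destruct (iRA _ _ _ _ _ _ I _ HA) as [_ [_ [k2 G2]]]. simpl in G2. fold s in G2. rewrite G0 in G2.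
        inversion G2; subst r' tv'. exists la. split; [unfold l; lia|exact HA].
      * inversion X; subst q'. exists (mlt m). split; [unfold l; lia|].
        destruct (iRA _ _ _ _ _ _ I _ Ha) as [_ [_ [k2 G2]]]. simpl in G2. fold p s in G2. rewrite G0 in G2.
        inversion G2; subst r1 tv1. exact Ha.
Qed.

Lemma inv_step n c ls c' tr g A R : Inv n c tr g A R -> step n c ls c' ->
  exists g' A' R', Inv n c' (tr ++ ls) g' A' R'.
Proof.
  intros I S. destruct S as [c i r s' ms ls Hi Hc Hb Hr|c i r v s' ms ls Hi Hc Hb Hw|c pre m post s' ms ls Hn Hc Hd|c i Hi Hc].
  - eexists _, _, _; eapply inv_read; eauto.
  - eexists _, _, _; eapply inv_write; eauto.
  - destruct (pl m) as [rd r|rd tv|rd r tv|rd] eqn:Hpl.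
    + eexists _, _, _; eapply inv_dq; eauto.
    + destruct (rid (loc c (dst m)) =? rd) eqn:E.
      * apply Nat.eqb_eq in E.
        destruct (length (set_add (EResp tv (src m)) (resps (loc c (dst m)))) =? maj n) eqn:Q.
        -- eexists _, _, _; eapply inv_dr_q; eauto.
        -- eexists _, _, _; eapply inv_dr_nq; eauto.
      * unfold deliver in Hd. rewrite Hpl, E in Hd. inversion Hd; subst. rewrite !app_nil_r.
        eexists _, _, _; eapply inv_drop; eauto.
    + eexists _, _, _; eapply inv_du; eauto.
    + destruct (rid (loc c (dst m)) =? rd) eqn:E.
      * apply Nat.eqb_eq in E.
        destruct (length (set_add (EAck (src m)) (resps (loc c (dst m)))) =? maj n) eqn:Q.
        -- eexists _, _, _; eapply inv_da_q; eauto.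
        -- eexists _, _, _; eapply inv_da_nq; eauto.
      * unfold deliver in Hd. rewrite Hpl, E in Hd. inversion Hd; subst. rewrite !app_nil_r.
        eexists _, _, _; eapply inv_drop; eauto.
  - rewrite app_nil_r. eexists _, _, _; eapply inv_crash; eauto.
Qed.

Lemma inv_exec n c tr c' : exec n c tr c' -> forall tr0 g A R, Inv n c tr0 g A R ->
  exists g' A' R', Inv n c' (tr0 ++ tr) g' A' R'.
Proof.
  induction 1 as [c|c ls c1 tr c2 S E IH]; intros tr0 g A R I.
  - rewrite app_nil_r; eauto.
  - destruct (inv_step _ _ _ _ _ _ _ _ I S) as [g1 [A1 [R1 I1]]].
    destruct (IH _ _ _ _ I1) as [g2 [A2 [R2 I2]]]. rewrite app_assoc; eauto.
Qed.

Theorem proposition1 (n f : nat) (tr : list label) (cf : config)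
  (x p1 k1 p2 k2 : nat) :
  2 * f < n ->
  exec n init_config tr cf ->
  crashed_count n cf <= f ->
  complete tr ->
  op_on tr p1 k1 x -> op_on tr p2 k2 x ->
  contains_update_phase tr p1 k1 ->
  contains_query_phase tr p2 k2 ->
  precedes_lt tr p1 k1 p2 k2 ->
  forall t1 t2, ts_of tr p1 k1 t1 -> ts_of tr p2 k2 t2 -> ts_le t1 t2.
Proof.
  intros _ E _ _ H1 H2 _ HQ HP.
  destruct (inv_exec _ _ _ _ E [] _ _ _ (inv_init n)) as [g [A [R I]]].
  simpl in I. eapply inv_final; eauto.
Qed.
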